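(* Let $q\geqslant 2$ be an integer. For $j=1,2$ let $\mathscr T_j=(V_j,\mathcal E_j)$ be a leafless, locally finite rooted directed tree with root $\mathsf{root}_j$, let $S^{(j)}_{\lambda,q}$ be the Dirichlet shift on $\mathscr T_j$, let $V^{(j)}_{\prec}$ be the set of branching vertices of $\mathscr T_j$, and let $\mathcal G^{(j)}_n:=\mathsf{Chi}^{\langle n\rangle}(\mathsf{root}_j)$ (the vertices of depth $n$ in $\mathscr T_j$), $n\in\mathbb N$. Then $S^{(1)}_{\lambda,q}$ is unitarily equivalent to $S^{(2)}_{\lambda,q}$ if and only if for every $n\in\mathbb N$, $$\sum_{v\in V^{(1)}_{\prec}\cap\mathcal G^{(1)}_n}\big(\mathrm{card}(\mathsf{Chi}(v))-1\big)=\sum_{v\in V^{(2)}_{\prec}\cap\mathcal G^{(2)}_n}\big(\mathrm{card}(\mathsf{Chi}(v))-1\big).$$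
   Context: A directed tree $\mathscr T=(V,\mathcal E)$ is a directed graph ($\mathcal E\subseteq V\times V$ without loops) with no circuits, which is connected and in which every vertex other than a root has a unique parent; it is rooted if it has a unique vertex $\mathsf{root}$ with no parent. For $v\in V$, $\mathsf{Chi}(v)=\{u:(v,u)\in\mathcal E\}$, and $\mathsf{Chi}^{\langle 0\rangle}(W)=W$, $\mathsf{Chi}^{\langle n\rangle}(W)=\bigcup_{u\in \mathsf{Chi}^{\langle n-1\rangle}(W)}\mathsf{Chi}(u)$. The tree is locally finite if every $\mathsf{Chi}(v)$ is finite, leafless if every $\mathsf{Chi}(v)$ is nonempty; $V$ is assumed countably infinite. The depth $n_v$ of $v$ is the unique $n$ with $v\in\mathsf{Chi}^{\langle n\rangle}(\mathsf{root})$. The set of branching vertices is $V_\prec=\{v\in V:\mathrm{card}(\mathsf{Chi}(v))\geqslant 2\}$. On $\ell^2(V)$ with orthonormal basis $\{e_u\}_{u\in V}$, the weighted shift with weights $\{\lambda_u\}_{u\ne\mathsf{root}}$ is the operator $S_\lambda e_v=\sum_{u\in\mathsf{Chi}(v)}\lambda_u e_u$. For real $q\geqslant 1$, the Dirichlet shift $S_{\lambda,q}$ on $\mathscr T$ is the (bounded) weighted shift with weights $\lambda_{u,q}=\frac{1}{\sqrt{\mathrm{card}(\mathsf{Chi}(v))}}\sqrt{\frac{n_v+q}{n_v+1}}$ for $u\in\mathsf{Chi}(v)$, $v\in V$. *)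

(* Defs.v *)
From Stdlib Require Import Reals List Relations ClassicalEpsilon.
Import ListNotations.
Open Scope R_scope.

Record C := mkC { Cre : R; Cim : R }.
Definition C0 : C := mkC 0 0.
Definition Cadd (z w : C) : C := mkC (Cre z + Cre w) (Cim z + Cim w).
Definition Cmul (z w : C) : C :=
  mkC (Cre z * Cre w - Cim z * Cim w) (Cre z * Cim w + Cim z * Cre w).
Definition Cscale (r : R) (z : C) : C := mkC (r * Cre z) (r * Cim z).
Definition Cnorm2 (z : C) : R := Cre z * Cre z + Cim z * Cim z.

Section Trees.
Context {V : Type} (E : V -> V -> Prop).

Fixpoint epath (v0 : V) (l : list V) : Prop :=
  match l with
  | [] => True
  | v1 :: l' => E v0 v1 /\ epath v1 l'
  end.

Definition has_circuit : Prop :=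
  exists (v0 : V) (l : list V),
    NoDup (v0 :: l) /\ l <> [] /\ epath v0 l /\ E (last l v0) v0.

Definition connected : Prop :=
  forall u v : V, clos_refl_sym_trans V E u v.

Definition rooted_directed_tree (root : V) : Prop :=
  (forall v, ~ E v v) /\
  ~ has_circuit /\
  connected /\
  (forall u, ~ E u root) /\
  (forall v, v <> root -> exists! u, E u v).

Definition locally_finite : Prop :=
  forall v, exists l : list V, NoDup l /\ forall u, E v u <-> In u l.

Definition leafless : Prop := forall v, exists u, E v u.

Definition countably_infinite_type : Prop :=
  exists f : nat -> V, (forall m n, f m = f n -> m = n) /\ (forall v, exists n, f n = v).

(* card (Chi v), well defined for locally finite trees *)
Definition card_chi (v : V) : nat :=
  epsilon (inhabits 0%nat)
    (fun k => exists l, NoDup l /\ (forall u, E v u <-> In u l) /\ length l = k).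

Inductive gen (root : V) : nat -> V -> Prop :=
  | gen0 : gen root 0 root
  | genS : forall n v u, gen root n v -> E v u -> gen root (S n) u.

Definition depth (root : V) (v : V) : nat :=
  epsilon (inhabits 0%nat) (fun n => gen root n v).

(* the parent of u (meaningful for u <> root) *)
Definition parent (root : V) (u : V) : V :=
  epsilon (inhabits root) (fun v => E v u).

Definition dirichlet_weight (root : V) (q : R) (u : V) : R :=
  let v := parent root u in
  / sqrt (INR (card_chi v)) * sqrt ((INR (depth root v) + q) / (INR (depth root v) + 1)).

(* The weighted shift acting coordinatewise:
   (S f)(u) = lambda_u f(parent u) for u <> root, (S f)(root) = 0,
   which is S e_v = sum_{u in Chi v} lambda_u e_u extended to l^2(V). *)
Definition dirichlet_shift (root : V) (q : R) (f : V -> C) : V -> C :=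
  fun u => if excluded_middle_informative (exists v, E v u)
           then Cscale (dirichlet_weight root q u) (f (parent root u))
           else C0.

Definition branching_sum (root : V) (n : nat) : nat :=
  epsilon (inhabits 0%nat)
    (fun s => exists l, NoDup l /\
       (forall v, In v l <-> (gen root n v /\ (2 <= card_chi v)%nat)) /\
       s = list_sum (map (fun v => (card_chi v - 1)%nat) l)).
End Trees.

Definition sumsq {V : Type} (f : V -> C) (l : list V) : R :=
  fold_right (fun v acc => Cnorm2 (f v) + acc) 0 l.

Definition in_l2 {V : Type} (f : V -> C) : Prop :=
  exists M, forall l : list V, NoDup l -> sumsq f l <= M.

Definition sqnorm_is {V : Type} (f : V -> C) (s : R) : Prop :=
  is_lub (fun x => exists l : list V, NoDup l /\ x = sumsq f l) s.

Definition unitarily_equivalent {V1 V2 : Type}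
  (S1 : (V1 -> C) -> (V1 -> C)) (S2 : (V2 -> C) -> (V2 -> C)) : Prop :=
  exists U : (V1 -> C) -> (V2 -> C),
    (forall f, in_l2 f -> in_l2 (U f)) /\
    (forall (a : C) f g, in_l2 f -> in_l2 g ->
        forall u, U (fun v => Cadd (Cmul a (f v)) (g v)) u = Cadd (Cmul a (U f u)) (U g u)) /\
    (forall f s, in_l2 f -> sqnorm_is f s -> sqnorm_is (U f) s) /\
    (forall g, in_l2 g -> exists f, in_l2 f /\ forall u, U f u = g u) /\
    (forall f, in_l2 f -> forall u, U (S1 f) u = S2 (U f) u).

(* Main.v *)
Require Import Defs.
From Stdlib Require Import Reals List Relations ClassicalEpsilon Lra Lia Psatz FunctionalExtensionality Permutation.
Require Import Defs.
Import ListNotations.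
Open Scope R_scope.

Definition deq {A} (x y : A) : {x = y} + {x <> y} := excluded_middle_informative (x = y).

Definition lsum {A} (f : A -> R) (l : list A) : R := fold_right (fun x acc => f x + acc) 0 l.

Lemma lsum_nil {A} (f : A -> R) : lsum f [] = 0. Proof. reflexivity. Qed.
Lemma lsum_cons {A} (f : A -> R) a l : lsum f (a :: l) = f a + lsum f l. Proof. reflexivity. Qed.

Lemma lsum_app {A} (f : A -> R) l1 l2 : lsum f (l1 ++ l2) = lsum f l1 + lsum f l2.
Proof. induction l1; simpl; [lra|]. unfold lsum in *; simpl. rewrite IHl1. lra. Qed.

Lemma lsum_ext {A} (f g : A -> R) l : (forall x, In x l -> f x = g x) -> lsum f l = lsum g l.
Proof. induction l; intros H; simpl; auto. rewrite (H a) by (left; auto). rewrite IHl; auto.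
  intros; apply H; right; auto. Qed.

Lemma lsum_plus {A} (f g : A -> R) l : lsum (fun x => f x + g x) l = lsum f l + lsum g l.
Proof. induction l; simpl; [lra|]. rewrite IHl. lra. Qed.

Lemma lsum_minus {A} (f g : A -> R) l : lsum (fun x => f x - g x) l = lsum f l - lsum g l.
Proof. induction l; simpl; [lra|]. rewrite IHl. lra. Qed.

Lemma lsum_scal {A} c (f : A -> R) l : lsum (fun x => c * f x) l = c * lsum f l.
Proof. induction l; simpl; [lra|]. rewrite IHl. lra. Qed.

Lemma lsum_scal_r {A} c (f : A -> R) l : lsum (fun x => f x * c) l = lsum f l * c.
Proof. induction l; simpl; [lra|]. rewrite IHl. lra. Qed.

Lemma lsum_zero {A} (l : list A) : lsum (fun _ => 0) l = 0.
Proof. induction l; simpl; lra. Qed.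

Lemma lsum_le {A} (f g : A -> R) l : (forall x, In x l -> f x <= g x) -> lsum f l <= lsum g l.
Proof. induction l; intros H; simpl; [lra|].
  assert (f a <= g a) by (apply H; left; auto).
  assert (lsum f l <= lsum g l) by (apply IHl; intros; apply H; right; auto). lra. Qed.

Lemma lsum_nonneg {A} (f : A -> R) l : (forall x, In x l -> 0 <= f x) -> 0 <= lsum f l.
Proof. intros H. rewrite <- (lsum_zero l). apply lsum_le; auto. Qed.

Lemma lsum_const {A} c (l : list A) : lsum (fun _ => c) l = INR (length l) * c.
Proof. induction l; simpl length; [simpl; lra|]. rewrite lsum_cons, IHl, S_INR. lra. Qed.

Lemma lsum_swap {A B} (f : A -> B -> R) l m :
  lsum (fun x => lsum (f x) m) l = lsum (fun y => lsum (fun x => f x y) l) m.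
Proof. induction l; simpl.
  - rewrite lsum_zero. reflexivity.
  - rewrite IHl. rewrite <- lsum_plus. reflexivity. Qed.

Lemma lsum_flat_map {A B} (f : B -> R) (g : A -> list B) l :
  lsum f (flat_map g l) = lsum (fun x => lsum f (g x)) l.
Proof. induction l; simpl; auto. rewrite lsum_app, IHl. reflexivity. Qed.

Lemma lsum_map {A B} (f : B -> R) (g : A -> B) l : lsum f (map g l) = lsum (fun x => f (g x)) l.
Proof. induction l; simpl; auto. rewrite IHl; reflexivity. Qed.

Lemma lsum_incl {A} (f : A -> R) l L : (forall x, 0 <= f x) -> NoDup l -> incl l L -> lsum f l <= lsum f L.
Proof.
  intros Hf Hl. revert L. induction Hl as [|a l Ha Hl IH]; intros L Hi.
  - simpl. apply lsum_nonneg; auto.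
  - assert (In a L) by (apply Hi; left; auto).
    destruct (in_split _ _ H) as [L1 [L2 ->]].
    rewrite lsum_app, lsum_cons.
    assert (lsum f l <= lsum f (L1 ++ L2)).
    { apply IH. intros x Hx. assert (In x (L1 ++ a :: L2)) by (apply Hi; right; auto).
      apply in_app_or in H0. apply in_or_app. destruct H0 as [?|[?|?]]; auto. subst; contradiction. }
    rewrite lsum_app in H0. rewrite lsum_cons. lra.
Qed.

Lemma lsum_delta {A} (h : A -> R) (l : list A) a :
  NoDup l -> In a l -> lsum (fun x => if deq a x then h x else 0) l = h a.
Proof.
  intros Hl. induction Hl as [|b l Hb Hl IH]; intros Ha; [destruct Ha|].
  rewrite lsum_cons. destruct Ha as [->|Ha].
  - destruct (deq a a); [|congruence].
    rewrite (lsum_ext _ (fun _ => 0)). rewrite lsum_zero; lra.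
    intros x Hx. destruct (deq a x); auto. subst; contradiction.
  - destruct (deq a b). subst; contradiction. rewrite IH; auto; lra.
Qed.

Lemma lsum_delta' {A} (h : A -> R) (l : list A) a :
  NoDup l -> In a l -> lsum (fun x => if deq x a then h x else 0) l = h a.
Proof. intros. rewrite <- (lsum_delta h l a) by auto. apply lsum_ext. intros x _.
  destruct (deq x a), (deq a x); subst; congruence. Qed.
Lemma Cnorm2_nonneg z : 0 <= Cnorm2 z.
Proof. unfold Cnorm2. nra. Qed.

Lemma sumsq_lsum {V} (f : V -> C) l : sumsq f l = lsum (fun v => Cnorm2 (f v)) l.
Proof. reflexivity. Qed.

Lemma sumsq_incl {V} (f : V -> C) l L : NoDup l -> incl l L -> sumsq f l <= sumsq f L.
Proof. intros. rewrite !sumsq_lsum. apply lsum_incl; auto. intros; apply Cnorm2_nonneg. Qed.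

Lemma sumsq_app {V} (f : V -> C) l1 l2 : sumsq f (l1 ++ l2) = sumsq f l1 + sumsq f l2.
Proof. rewrite !sumsq_lsum. apply lsum_app. Qed.

Lemma sumsq_ext {V} (f g : V -> C) l : (forall x, In x l -> f x = g x) -> sumsq f l = sumsq g l.
Proof. intros H. rewrite !sumsq_lsum. apply lsum_ext. intros x Hx; rewrite H; auto. Qed.

Lemma sumsq_nonneg {V} (f : V -> C) l : 0 <= sumsq f l.
Proof. rewrite sumsq_lsum. apply lsum_nonneg. intros; apply Cnorm2_nonneg. Qed.

Definition Nrm {V} (f : V -> C) : R := epsilon (inhabits 0) (fun s => sqnorm_is f s).

Lemma sqnorm_unique {V} (f : V -> C) s t : sqnorm_is f s -> sqnorm_is f t -> s = t.
Proof. apply is_lub_u. Qed.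

Lemma l2_sqnorm {V} (f : V -> C) : in_l2 f -> sqnorm_is f (Nrm f).
Proof.
  intros [M HM]. unfold Nrm. apply epsilon_spec.
  destruct (completeness (fun x => exists l : list V, NoDup l /\ x = sumsq f l)) as [m Hm].
  - exists M. intros x [l [Hl ->]]. apply HM; auto.
  - exists 0, []. split; [constructor|reflexivity].
  - exists m. exact Hm.
Qed.

Lemma Nrm_eq {V} (f : V -> C) s : sqnorm_is f s -> Nrm f = s.
Proof. intros H. apply (sqnorm_unique f); auto. apply l2_sqnorm. exists s.
  intros l Hl. apply H. exists l; auto. Qed.

Lemma sqnorm_l2 {V} (f : V -> C) s : sqnorm_is f s -> in_l2 f.
Proof. intros H. exists s. intros l Hl. apply H. exists l; auto. Qed.

Lemma sqnorm_eq {V} (f : V -> C) s t : sqnorm_is f s -> s = t -> sqnorm_is f t.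
Proof. intros H ->; auto. Qed.

Definition notinb {V} (L : list V) (x : V) : bool :=
  if excluded_middle_informative (In x L) then false else true.

Lemma notinb_spec {V} (L : list V) x : notinb L x = true <-> ~ In x L.
Proof. unfold notinb. destruct (excluded_middle_informative (In x L)); split; intros; auto; try discriminate; contradiction. Qed.

Lemma ext_list_props {V} (L l : list V) : NoDup L -> NoDup l ->
  NoDup (L ++ filter (notinb L) l) /\ incl l (L ++ filter (notinb L) l).
Proof.
  intros HL Hl. split.
  - apply NoDup_app; auto. apply NoDup_filter; auto.
    intros a Ha Hf. apply filter_In in Hf. destruct Hf as [_ Hf]. apply notinb_spec in Hf. auto.
  - intros x Hx. apply in_or_app. destruct (excluded_middle_informative (In x L)); auto.
    right. apply filter_In. split; auto. apply notinb_spec; auto.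
Qed.

Lemma sqnorm_perturb {V} (g h : V -> C) L s : NoDup L -> (forall u, ~ In u L -> h u = g u) ->
  sqnorm_is g s -> sqnorm_is h (s + sumsq h L - sumsq g L).
Proof.
  intros HL Hgh [Hub Hlub].
  assert (HF : forall l, sumsq h (filter (notinb L) l) = sumsq g (filter (notinb L) l)).
  { intros l. apply sumsq_ext. intros x Hx. apply filter_In in Hx. apply Hgh. apply notinb_spec. tauto. }
  split.
  - intros x [l [Hl ->]]. destruct (ext_list_props L l HL Hl) as [Hn Hi].
    pose proof (sumsq_incl h _ _ Hl Hi). rewrite sumsq_app, HF in H.
    assert (sumsq g (L ++ filter (notinb L) l) <= s) by (apply Hub; exists (L ++ filter (notinb L) l); auto).
    rewrite sumsq_app in H0. lra.
  - intros b Hb.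
    assert (s <= b - sumsq h L + sumsq g L); [|lra].
    apply Hlub. intros x [l [Hl ->]]. destruct (ext_list_props L l HL Hl) as [Hn Hi].
    pose proof (sumsq_incl g _ _ Hl Hi). rewrite sumsq_app, <- HF in H.
    assert (sumsq h (L ++ filter (notinb L) l) <= b) by (apply Hb; exists (L ++ filter (notinb L) l); auto).
    rewrite sumsq_app in H0. lra.
Qed.

Lemma sqnorm_zero {V} : sqnorm_is (fun _ : V => C0) 0.
Proof. split.
  - intros x [l [_ ->]]. rewrite sumsq_lsum. unfold Cnorm2, C0; simpl.
    rewrite (lsum_ext _ (fun _ => 0)). rewrite lsum_zero; lra. intros; lra.
  - intros b Hb. apply Hb. exists []. split; [constructor|reflexivity].
Qed.

Lemma sqnorm_supp {V} (g : V -> C) L : NoDup L -> (forall u, ~ In u L -> g u = C0) ->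
  sqnorm_is g (sumsq g L).
Proof.
  intros HL Hg. eapply sqnorm_eq. apply (sqnorm_perturb (fun _ => C0) g L 0 HL Hg sqnorm_zero).
  rewrite sumsq_lsum with (f := fun _ => C0). unfold Cnorm2, C0; simpl.
  rewrite (lsum_ext _ (fun _ => 0)). rewrite lsum_zero; lra. intros; lra.
Qed.

Lemma Cnorm2_mul a z : Cnorm2 (Cmul a z) = Cnorm2 a * Cnorm2 z.
Proof. unfold Cnorm2, Cmul; simpl. ring. Qed.

Lemma sqnorm_scale {V} (y : V -> C) a s : Cnorm2 a = 1 -> sqnorm_is y s ->
  sqnorm_is (fun v => Cmul a (y v)) s.
Proof.
  intros Ha [Hub Hlub].
  assert (E : forall l, sumsq (fun v => Cmul a (y v)) l = sumsq y l).
  { intros l. rewrite !sumsq_lsum. apply lsum_ext. intros. rewrite Cnorm2_mul, Ha. lra. }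
  split.
  - intros x [l [Hl ->]]. rewrite E. apply Hub. exists l; auto.
  - intros b Hb. apply Hlub. intros x [l [Hl ->]]. rewrite <- E. apply Hb. exists l; auto.
Qed.

Definition comb {V} (a : C) (y x : V -> C) : V -> C := fun v => Cadd (Cmul a (y v)) (x v).

Lemma l2_comb {V} a (y x : V -> C) : in_l2 y -> in_l2 x -> in_l2 (comb a y x).
Proof.
  intros [My HMy] [Mx HMx]. exists (2 * Cnorm2 a * My + 2 * Mx).
  intros l Hl. specialize (HMy l Hl). specialize (HMx l Hl).
  assert (sumsq (comb a y x) l <= 2 * Cnorm2 a * sumsq y l + 2 * sumsq x l).
  { rewrite !sumsq_lsum. rewrite <- lsum_scal, <- lsum_scal, <- lsum_plus.
    apply lsum_le. intros v _. unfold comb, Cnorm2, Cadd, Cmul; simpl.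
    destruct a as [ar ai], (y v) as [yr yi], (x v) as [xr xi]; simpl.
    set (P := ar * yr - ai * yi). set (Q := ar * yi + ai * yr).
    assert (P * P + Q * Q = (ar * ar + ai * ai) * (yr * yr + yi * yi)) by (unfold P, Q; ring).
    replace (2 * (ar * ar + ai * ai) * (yr * yr + yi * yi)) with (2 * (P * P + Q * Q)) by (rewrite H; ring). pose proof (pow2_ge_0 (P - xr)). pose proof (pow2_ge_0 (Q - xi)). nra. }
  pose proof (Cnorm2_nonneg a). nra.
Qed.

Definition c1 := mkC 1 0.
Definition cm1 := mkC (-1) 0.
Definition ci := mkC 0 1.
Definition cmi := mkC 0 (-1).

Definition ipR {V} (x y : V -> C) : R := (Nrm (comb c1 y x) - Nrm (comb cm1 y x)) / 4.
Definition ipI {V} (x y : V -> C) : R := (Nrm (comb ci y x) - Nrm (comb cmi y x)) / 4.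

Lemma ip_fin {V} (x y : V -> C) L : in_l2 x -> in_l2 y -> NoDup L ->
  ((forall u, ~ In u L -> y u = C0) \/ (forall u, ~ In u L -> x u = C0)) ->
  ipR x y = lsum (fun u => Cre (x u) * Cre (y u) + Cim (x u) * Cim (y u)) L /\
  ipI x y = lsum (fun u => Cim (x u) * Cre (y u) - Cre (x u) * Cim (y u)) L.
Proof.
  intros Hx Hy HL Hs.
  assert (HK : exists K, forall a, Cnorm2 a = 1 -> Nrm (comb a y x) = K + sumsq (comb a y x) L).
  { destruct Hs as [Hs|Hs].
    - exists (Nrm x - sumsq x L). intros a Ha. apply Nrm_eq.
      eapply sqnorm_eq. apply sqnorm_perturb; [exact HL| |apply l2_sqnorm; exact Hx].
      intros u Hu. unfold comb. rewrite Hs by auto. unfold Cadd, Cmul, C0; simpl. destruct (x u); simpl; f_equal; ring.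
      ring.
    - exists (Nrm y - sumsq y L). intros a Ha. apply Nrm_eq.
      eapply sqnorm_eq. apply (sqnorm_perturb (fun v => Cmul a (y v))); [exact HL| |apply sqnorm_scale; auto; apply l2_sqnorm; exact Hy].
      intros u Hu. unfold comb. rewrite Hs by auto. unfold Cadd, Cmul, C0; simpl. destruct (Cmul a (y u)); simpl; f_equal; ring.
      assert (sumsq (fun v => Cmul a (y v)) L = sumsq y L).
      { rewrite !sumsq_lsum. apply lsum_ext. intros. rewrite Cnorm2_mul, Ha. lra. }
      rewrite H. ring. }
  destruct HK as [K HK].
  unfold ipR, ipI. rewrite !HK by (unfold Cnorm2, c1, cm1, ci, cmi; simpl; ring).
  split.
  - replace ((K + sumsq (comb c1 y x) L - (K + sumsq (comb cm1 y x) L)) / 4)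
      with ((sumsq (comb c1 y x) L - sumsq (comb cm1 y x) L) / 4) by field.
    rewrite !sumsq_lsum, <- lsum_minus. unfold Rdiv. rewrite <- lsum_scal_r. apply lsum_ext.
    intros u _. unfold comb, Cnorm2, Cadd, Cmul, c1, cm1; simpl. field.
  - replace ((K + sumsq (comb ci y x) L - (K + sumsq (comb cmi y x) L)) / 4)
      with ((sumsq (comb ci y x) L - sumsq (comb cmi y x) L) / 4) by field.
    rewrite !sumsq_lsum, <- lsum_minus. unfold Rdiv. rewrite <- lsum_scal_r. apply lsum_ext.
    intros u _. unfold comb, Cnorm2, Cadd, Cmul, ci, cmi; simpl. field.
Qed.

Section Uip.
Context {V1 V2 : Type} (U : (V1 -> C) -> (V2 -> C)).
Hypothesis Ul2 : forall f, in_l2 f -> in_l2 (U f).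
Hypothesis Ulin : forall (a : C) f g, in_l2 f -> in_l2 g ->
        forall u, U (fun v => Cadd (Cmul a (f v)) (g v)) u = Cadd (Cmul a (U f u)) (U g u).
Hypothesis Uiso : forall f s, in_l2 f -> sqnorm_is f s -> sqnorm_is (U f) s.

Lemma U_Nrm_comb a (x y : V1 -> C) : in_l2 x -> in_l2 y ->
  Nrm (comb a (U y) (U x)) = Nrm (comb a y x).
Proof.
  intros Hx Hy. assert (E : comb a (U y) (U x) = U (comb a y x)).
  { apply functional_extensionality. intros u. unfold comb. rewrite Ulin; auto. }
  rewrite E. apply Nrm_eq. apply Uiso. apply l2_comb; auto. apply l2_sqnorm, l2_comb; auto.
Qed.

Lemma U_ipR (x y : V1 -> C) : in_l2 x -> in_l2 y -> ipR (U x) (U y) = ipR x y.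
Proof. intros. unfold ipR. rewrite !U_Nrm_comb; auto. Qed.
Lemma U_ipI (x y : V1 -> C) : in_l2 x -> in_l2 y -> ipI (U x) (U y) = ipI x y.
Proof. intros. unfold ipI. rewrite !U_Nrm_comb; auto. Qed.
End Uip.
Lemma NoDup_flat_map {A B} (f : A -> list B) (l : list A) :
  NoDup l -> (forall x, In x l -> NoDup (f x)) ->
  (forall x y z, In x l -> In y l -> In z (f x) -> In z (f y) -> x = y) ->
  NoDup (flat_map f l).
Proof.
  induction 1 as [|a l Ha Hl IH]; intros Hf Hd; simpl; [constructor|].
  apply NoDup_app.
  - apply Hf; left; auto.
  - apply IH. intros; apply Hf; right; auto. intros; eapply Hd; eauto; right; auto.
  - intros z Hz Hz'. apply in_flat_map in Hz'. destruct Hz' as [y [Hy Hzy]].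
    assert (a = y) by (eapply Hd; eauto; [left; auto|right; auto]). subst. contradiction.
Qed.

Section Tree.
Context {V : Type} (E : V -> V -> Prop) (root : V).
Hypothesis T : rooted_directed_tree E root.
Hypothesis lf : locally_finite E.
Hypothesis ll : leafless E.

Lemma no_parent_root u : ~ E u root.
Proof. destruct T as [_ [_ [_ [H _]]]]. apply H. Qed.

Lemma parent_unique v v' u : E v u -> E v' u -> v = v'.
Proof.
  intros H1 H2. destruct T as [_ [_ [_ [Hr Hu]]]].
  assert (u <> root) by (intros ->; eapply Hr; eauto).
  destruct (Hu u H) as [p [_ Hp]]. rewrite <- (Hp v H1). apply Hp; auto.
Qed.

Definition chl (v : V) : list V :=
  epsilon (inhabits []) (fun l => NoDup l /\ forall u, E v u <-> In u l).

Lemma chl_spec v : NoDup (chl v) /\ forall u, E v u <-> In u (chl v).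
Proof. unfold chl. apply epsilon_spec. apply lf. Qed.

Lemma chl_nodup v : NoDup (chl v). Proof. apply chl_spec. Qed.
Lemma chl_E v u : E v u <-> In u (chl v). Proof. apply chl_spec. Qed.

Lemma card_chl v : card_chi E v = length (chl v).
Proof.
  unfold card_chi.
  assert (H : exists k, exists l, NoDup l /\ (forall u, E v u <-> In u l) /\ length l = k).
  { exists (length (chl v)), (chl v). split; [apply chl_nodup|split; [apply chl_E|auto]]. }
  pose proof (epsilon_spec (inhabits 0%nat) _ H) as [l [Hl [Hm Hlen]]].
  rewrite <- Hlen. apply Nat.le_antisymm; apply NoDup_incl_length; try apply chl_nodup; auto;
  intros x Hx; [apply chl_E, Hm | apply Hm, chl_E]; auto.
Qed.

Lemma card_pos v : (1 <= card_chi E v)%nat.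
Proof. rewrite card_chl. destruct (ll v) as [u Hu]. apply chl_E in Hu.
  destruct (chl v); [destruct Hu|simpl; lia]. Qed.

Lemma gen0_inv u : gen E root 0 u -> u = root.
Proof. intros H. inversion H. auto. Qed.

Lemma genS_inv n u : gen E root (S n) u -> exists v, gen E root n v /\ E v u.
Proof. intros H. inversion H. eauto. Qed.

Fixpoint G (n : nat) : list V :=
  match n with O => [root] | S n => flat_map chl (G n) end.

Lemma G_gen n u : In u (G n) <-> gen E root n u.
Proof.
  revert u; induction n; intros u; simpl.
  - split. intros [<-|[]]; constructor. intros H; inversion H; auto.
  - rewrite in_flat_map. split.
    + intros [v [Hv Hu]]. econstructor. apply IHn; eauto. apply chl_E; auto.
    + intros H; apply genS_inv in H. destruct H as [v [Hv Hvu]]. exists v. split. apply IHn; auto. apply chl_E; auto.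
Qed.

Lemma G_nodup n : NoDup (G n).
Proof.
  induction n; simpl. constructor; [intros []|constructor].
  apply NoDup_flat_map; auto. intros; apply chl_nodup.
  intros x y z _ _ Hx Hy. apply chl_E in Hx, Hy. eapply parent_unique; eauto.
Qed.

Lemma gen_unique n m u : gen E root n u -> gen E root m u -> n = m.
Proof.
  revert m u; induction n; intros m u H1 H2.
  - apply gen0_inv in H1. rewrite H1 in H2. destruct m; auto.
    apply genS_inv in H2. destruct H2 as [v [_ Hv]]. exfalso; eapply no_parent_root; eauto.
  - apply genS_inv in H1. destruct H1 as [v [Hv Hvu]]. destruct m.
    + apply gen0_inv in H2. rewrite H2 in Hvu. exfalso; eapply no_parent_root; eauto.
    + apply genS_inv in H2. destruct H2 as [w [Hw Hwu]].
      f_equal. apply (IHn _ v); auto. rewrite (parent_unique v w u); auto.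
Qed.

Lemma all_gen u : exists n, gen E root n u.
Proof.
  destruct T as [_ [_ [Hc _]]].
  assert (forall x y, clos_refl_sym_trans V E x y -> ((exists n, gen E root n x) <-> (exists n, gen E root n y))).
  { intros x y H. induction H.
    - split; intros [n Hn]. exists (S n); econstructor; eauto.
      destruct n. apply gen0_inv in Hn. rewrite Hn in H. exfalso; eapply no_parent_root; eauto.
      apply genS_inv in Hn. destruct Hn as [v [Hv Hvy]].
      exists n. rewrite (parent_unique x v y); auto.
    - tauto.
    - tauto.
    - tauto. }
  apply (H root u). apply Hc. exists 0%nat; constructor.
Qed.

Lemma depth_spec n u : gen E root n u -> depth E root u = n.
Proof.
  intros H. unfold depth. apply (gen_unique _ _ u); auto.
  apply epsilon_spec. eauto.
Qed.

Lemma depth_G n u : In u (G n) -> depth E root u = n.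
Proof. intros H; apply depth_spec, G_gen; auto. Qed.

Lemma in_G_depth u : In u (G (depth E root u)).
Proof. destruct (all_gen u) as [n Hn]. rewrite (depth_spec n u Hn). apply G_gen; auto. Qed.

Lemma parent_spec v u : E v u -> parent E root u = v.
Proof. intros H. unfold parent. apply (parent_unique _ _ u); auto. apply epsilon_spec. eauto. Qed.

Lemma chl_parent v u : In u (chl v) -> parent E root u = v.
Proof. intros H. apply parent_spec, chl_E; auto. Qed.

Lemma chl_G n v u : In v (G n) -> In u (chl v) -> In u (G (S n)).
Proof. intros. simpl. apply in_flat_map. eauto. Qed.

Lemma G_S_inv n u : In u (G (S n)) -> In (parent E root u) (G n) /\ In u (chl (parent E root u)).
Proof. simpl. rewrite in_flat_map. intros [v [Hv Hu]]. rewrite (chl_parent v u Hu). auto. Qed.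

Lemma G0_inv u : In u (G 0) -> u = root.
Proof. simpl. intros [<-|[]]; auto. Qed.

Lemma haspar_G u : (exists v, E v u) -> exists n, In u (G (S n)).
Proof. intros [v Hv]. destruct (all_gen v) as [n Hn]. exists n. apply G_gen. econstructor; eauto. Qed.

Definition Gall (N : nat) : list V := flat_map G (seq 0 (S N)).

Lemma Gall_in N u : In u (Gall N) <-> (depth E root u <= N)%nat.
Proof.
  unfold Gall. rewrite in_flat_map. split.
  - intros [n [Hn Hu]]. apply in_seq in Hn. rewrite (depth_G n u Hu). lia.
  - intros H. exists (depth E root u). split. apply in_seq; lia. apply in_G_depth.
Qed.

Lemma Gall_nodup N : NoDup (Gall N).
Proof.
  apply NoDup_flat_map. apply seq_NoDup. intros; apply G_nodup.
  intros x y z _ _ Hx Hy. rewrite <- (depth_G x z Hx). apply depth_G; auto.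
Qed.

Lemma Gall_S N : Gall (S N) = Gall N ++ G (S N).
Proof. unfold Gall. rewrite seq_S. rewrite flat_map_app. simpl. rewrite app_nil_r. reflexivity. Qed.

Lemma list_in_Gall (l : list V) : exists N, incl l (Gall N).
Proof.
  induction l as [|a l [N HN]]. exists 0%nat. intros x [].
  exists (Nat.max N (depth E root a)). intros x [<-|Hx]; apply Gall_in.
  lia. apply HN, Gall_in in Hx. lia.
Qed.

Lemma sqnorm_T (g : V -> C) s :
  sqnorm_is g s <-> is_lub (fun x => exists N, x = sumsq g (Gall N)) s.
Proof.
  split; intros [Hub Hlub]; split.
  - intros x [N ->]. apply Hub. exists (Gall N). split; auto. apply Gall_nodup.
  - intros b Hb. apply Hlub. intros x [l [Hl ->]]. destruct (list_in_Gall l) as [N HN].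
    apply Rle_trans with (sumsq g (Gall N)). apply sumsq_incl; auto. apply Hb; eauto.
  - intros x [l [Hl ->]]. destruct (list_in_Gall l) as [N HN].
    apply Rle_trans with (sumsq g (Gall N)). apply sumsq_incl; auto. apply Hub; eauto.
  - intros b Hb. apply Hlub. intros x [N ->]. apply Hb. exists (Gall N). split; auto. apply Gall_nodup.
Qed.

Lemma l2_T (g : V -> C) : in_l2 g <-> exists M, forall N, sumsq g (Gall N) <= M.
Proof.
  split.
  - intros [M HM]. exists M. intros N. apply HM, Gall_nodup.
  - intros [M HM]. exists M. intros l Hl. destruct (list_in_Gall l) as [N HN].
    apply Rle_trans with (sumsq g (Gall N)). apply sumsq_incl; auto. auto.
Qed.

Variable q : R.
Hypothesis hq : 1 <= q.

Definition cc (n : nat) : R := (INR n + q) / (INR n + 1).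

Lemma cc_pos n : 0 < cc n.
Proof. unfold cc. pose proof (pos_INR n). apply Rdiv_lt_0_compat; lra. Qed.

Lemma cc_le n : cc n <= q.
Proof. unfold cc. pose proof (pos_INR n). apply Rmult_le_reg_r with (INR n + 1). lra.
  unfold Rdiv. rewrite Rmult_assoc, Rinv_l by lra. nra. Qed.

Definition lam (v : V) : R := / sqrt (INR (card_chi E v)) * sqrt (cc (depth E root v)).

Lemma weight_chl v u : In u (chl v) -> dirichlet_weight E root q u = lam v.
Proof. intros H. unfold dirichlet_weight. rewrite (chl_parent v u H). reflexivity. Qed.

Lemma lam_sq v : lam v * lam v = cc (depth E root v) / INR (card_chi E v).
Proof.
  unfold lam. pose proof (card_pos v). assert (Hk : 0 < INR (card_chi E v)) by (apply lt_0_INR; lia).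
  pose proof (cc_pos (depth E root v)).
  assert (Hs : 0 < sqrt (INR (card_chi E v))) by (apply sqrt_lt_R0; auto).
  replace (/ sqrt (INR (card_chi E v)) * sqrt (cc (depth E root v)) *
    (/ sqrt (INR (card_chi E v)) * sqrt (cc (depth E root v))))
  with ((sqrt (cc (depth E root v)) * sqrt (cc (depth E root v))) /
        (sqrt (INR (card_chi E v)) * sqrt (INR (card_chi E v)))) by (field; lra).
  rewrite !sqrt_sqrt; lra.
Qed.

Lemma sum_lam_sq v : lsum (fun _ => lam v * lam v) (chl v) = cc (depth E root v).
Proof.
  rewrite lsum_const, lam_sq, <- card_chl. pose proof (card_pos v).
  assert (0 < INR (card_chi E v)) by (apply lt_0_INR; lia). field. lra.
Qed.

Notation Sh := (dirichlet_shift E root q).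

Lemma S_chl f v u : In u (chl v) -> Sh f u = Cscale (lam v) (f v).
Proof.
  intros H. unfold dirichlet_shift. destruct (excluded_middle_informative _) as [_|n].
  - rewrite (weight_chl v u H), (chl_parent v u H). reflexivity.
  - exfalso. apply n. exists v. apply chl_E; auto.
Qed.

Lemma S_nopar f u : ~ (exists v, E v u) -> Sh f u = C0.
Proof. intros H. unfold dirichlet_shift. destruct (excluded_middle_informative _); tauto. Qed.

Lemma S_root f : Sh f root = C0.
Proof. apply S_nopar. intros [v Hv]. eapply no_parent_root; eauto. Qed.

Lemma Cnorm2_scale r z : Cnorm2 (Cscale r z) = r * r * Cnorm2 z.
Proof. unfold Cnorm2, Cscale; simpl. ring. Qed.

Lemma sumsq_S_G f n : sumsq (Sh f) (G (S n)) = cc n * sumsq f (G n).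
Proof.
  simpl G. rewrite !sumsq_lsum, lsum_flat_map, <- lsum_scal. apply lsum_ext.
  intros v Hv. rewrite (lsum_ext _ (fun _ => lam v * lam v * Cnorm2 (f v))).
  rewrite lsum_scal_r, sum_lam_sq, (depth_G n v Hv). reflexivity.
  intros u Hu. rewrite (S_chl f v u Hu), Cnorm2_scale. reflexivity.
Qed.

Lemma sumsq_S_G0 f : sumsq (Sh f) (G 0) = 0.
Proof. simpl. rewrite S_root. unfold Cnorm2, C0; simpl. ring. Qed.

Lemma S_bound f N : sumsq (Sh f) (Gall N) + q * sumsq f (G N) <= q * sumsq f (Gall N).
Proof.
  induction N.
  - unfold Gall. simpl flat_map. pose proof (sumsq_S_G0 f). simpl G in *. lra.
  - rewrite !Gall_S, !sumsq_app, sumsq_S_G.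
    pose proof (cc_le N). pose proof (sumsq_nonneg f (G N)). pose proof (sumsq_nonneg f (G (S N))).
    nra.
Qed.

Lemma S_l2 f : in_l2 f -> in_l2 (Sh f).
Proof.
  intros Hf. apply l2_T in Hf. destruct Hf as [M HM]. apply l2_T. exists (q * M).
  intros N. pose proof (S_bound f N). pose proof (HM N). pose proof (sumsq_nonneg f (G N)). nra.
Qed.

Definition ev (w : V) : V -> C := fun u => if deq u w then c1 else C0.

Lemma ev_supp w u : ~ In u [w] -> ev w u = C0.
Proof. intros H. unfold ev. destruct (deq u w); auto. subst. exfalso; apply H; left; auto. Qed.

Lemma ev_sq w : sqnorm_is (ev w) 1.
Proof. eapply sqnorm_eq. apply (sqnorm_supp _ [w]). apply NoDup_cons; [intros []|constructor]. apply ev_supp.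
  simpl. unfold ev. destruct (deq w w); [|congruence]. unfold Cnorm2, c1; simpl. ring. Qed.

Lemma ev_l2 w : in_l2 (ev w).
Proof. eapply sqnorm_l2. apply ev_sq. Qed.

Lemma ip_ev_r x w : in_l2 x -> ipR x (ev w) = Cre (x w) /\ ipI x (ev w) = Cim (x w).
Proof.
  intros Hx. destruct (ip_fin x (ev w) [w] Hx (ev_l2 w)) as [H1 H2].
  apply NoDup_cons; [intros []|constructor]. left; apply ev_supp.
  rewrite H1, H2. simpl. unfold ev. destruct (deq w w); [|congruence]. unfold c1; simpl. split; ring.
Qed.

Lemma ip_ev_l x w : in_l2 x -> ipR (ev w) x = Cre (x w) /\ ipI (ev w) x = - Cim (x w).
Proof.
  intros Hx. destruct (ip_fin (ev w) x [w] (ev_l2 w) Hx) as [H1 H2].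
  apply NoDup_cons; [intros []|constructor]. right; apply ev_supp.
  rewrite H1, H2. simpl. unfold ev. destruct (deq w w); [|congruence]. unfold c1; simpl. split; ring.
Qed.

Lemma S_ev_supp w u : ~ In u (chl w) -> Sh (ev w) u = C0.
Proof.
  intros H. destruct (excluded_middle_informative (exists v, E v u)) as [[v Hv]|Hn].
  - apply chl_E in Hv. rewrite (S_chl _ v u Hv). unfold ev. destruct (deq v w).
    subst; contradiction. unfold Cscale, C0; simpl. f_equal; ring.
  - apply S_nopar; auto.
Qed.

Lemma S_ev_chl w u : In u (chl w) -> Sh (ev w) u = mkC (lam w) 0.
Proof. intros H. rewrite (S_chl _ w u H). unfold ev. destruct (deq w w); [|congruence].
  unfold Cscale, c1; simpl. f_equal; ring. Qed.

Lemma ip_S_ev_r y w : in_l2 y ->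
  ipR (Sh y) (Sh (ev w)) = cc (depth E root w) * Cre (y w) /\
  ipI (Sh y) (Sh (ev w)) = cc (depth E root w) * Cim (y w).
Proof.
  intros Hy. destruct (ip_fin (Sh y) (Sh (ev w)) (chl w) (S_l2 y Hy) (S_l2 _ (ev_l2 w)) (chl_nodup w)) as [H1 H2].
  left; apply S_ev_supp.
  rewrite H1, H2, <- sum_lam_sq, <- !lsum_scal_r. split; apply lsum_ext; intros u Hu;
  rewrite (S_ev_chl w u Hu), (S_chl y w u Hu); unfold Cscale; simpl; ring.
Qed.

Lemma ip_S_ev_l y w : in_l2 y ->
  ipR (Sh (ev w)) (Sh y) = cc (depth E root w) * Cre (y w) /\
  ipI (Sh (ev w)) (Sh y) = - (cc (depth E root w) * Cim (y w)).
Proof.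
  intros Hy. destruct (ip_fin (Sh (ev w)) (Sh y) (chl w) (S_l2 _ (ev_l2 w)) (S_l2 y Hy) (chl_nodup w)) as [H1 H2].
  right; apply S_ev_supp.
  rewrite H1, H2, <- sum_lam_sq. rewrite <- !lsum_scal_r. split.
  apply lsum_ext; intros u Hu;
  rewrite (S_ev_chl w u Hu), (S_chl y w u Hu); unfold Cscale; simpl; ring.
  match goal with |- _ = - ?X => replace (- X) with (-1 * X) by ring end. rewrite <- lsum_scal.
  apply lsum_ext; intros u Hu;
  rewrite (S_ev_chl w u Hu), (S_chl y w u Hu); unfold Cscale; simpl; ring.
Qed.

End Tree.
Lemma cc_inj q n m : 1 < q -> cc q n = cc q m -> n = m.
Proof.
  intros Hq H. unfold cc in H. pose proof (pos_INR n). pose proof (pos_INR m).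
  apply (Rmult_eq_compat_r ((INR n + 1) * (INR m + 1))) in H.
  replace ((INR n + q) / (INR n + 1) * ((INR n + 1) * (INR m + 1))) with ((INR n + q) * (INR m + 1)) in H by (field; lra).
  replace ((INR m + q) / (INR m + 1) * ((INR n + 1) * (INR m + 1))) with ((INR m + q) * (INR n + 1)) in H by (field; lra).
  apply INR_eq. assert ((q - 1) * (INR m - INR n) = 0) by nra.
  apply Rmult_integral in H2. destruct H2; lra.
Qed.

Section Fwd.
Context {V1 V2 : Type} (E1 : V1 -> V1 -> Prop) (root1 : V1) (E2 : V2 -> V2 -> Prop) (root2 : V2).
Hypothesis T1 : rooted_directed_tree E1 root1.
Hypothesis lf1 : locally_finite E1.
Hypothesis ll1 : leafless E1.
Hypothesis T2 : rooted_directed_tree E2 root2.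
Hypothesis lf2 : locally_finite E2.
Hypothesis ll2 : leafless E2.
Variable q : R.
Hypothesis hq : 1 < q.
Let hq' : 1 <= q. Proof. lra. Qed.
Notation S1 := (dirichlet_shift E1 root1 q).
Notation S2 := (dirichlet_shift E2 root2 q).
Variable U : (V1 -> C) -> (V2 -> C).
Hypothesis Ul2 : forall f, in_l2 f -> in_l2 (U f).
Hypothesis Ulin : forall (a : C) f g, in_l2 f -> in_l2 g ->
        forall u, U (fun v => Cadd (Cmul a (f v)) (g v)) u = Cadd (Cmul a (U f u)) (U g u).
Hypothesis Uiso : forall f s, in_l2 f -> sqnorm_is f s -> sqnorm_is (U f) s.
Hypothesis Usurj : forall g, in_l2 g -> exists f, in_l2 f /\ forall u, U f u = g u.
Hypothesis Uint : forall f, in_l2 f -> forall u, U (S1 f) u = S2 (U f) u.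

Lemma UipR x y : in_l2 x -> in_l2 y -> ipR (U x) (U y) = ipR x y.
Proof. apply U_ipR; auto. Qed.
Lemma UipI x y : in_l2 x -> in_l2 y -> ipI (U x) (U y) = ipI x y.
Proof. apply U_ipI; auto. Qed.

Lemma Uint_f f : in_l2 f -> S2 (U f) = U (S1 f).
Proof. intros. apply functional_extensionality. intros; rewrite Uint; auto. Qed.

Lemma coef_rel v w f : in_l2 f -> (forall u, U f u = ev w u) ->
  Cre (f v) = Cre (U (ev v) w) /\ Cim (f v) = - Cim (U (ev v) w).
Proof.
  intros Hf Hfw. assert (Ef : U f = ev w) by (apply functional_extensionality; auto).
  destruct (ip_ev_r f v Hf) as [A1 A2]. destruct (ip_ev_l (U (ev v)) w (Ul2 _ (ev_l2 v))) as [B1 B2].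
  rewrite <- UipR, Ef in A1 by (auto; apply ev_l2). rewrite <- UipI, Ef in A2 by (auto; apply ev_l2). split; lra.
Qed.

Lemma supp_U n v w : In v (G E1 root1 n) -> depth E2 root2 w <> n -> U (ev v) w = C0.
Proof.
  intros Hv Hw. destruct (Usurj (ev w) (ev_l2 w)) as [z [Hz Hzw]].
  destruct (coef_rel v w z Hz Hzw) as [R1 R2].
  assert (Ez : U z = ev w) by (apply functional_extensionality; auto).
  set (y := U (ev v)).
  assert (Hy : in_l2 y) by (apply Ul2, ev_l2).
  destruct (ip_S_ev_r E2 root2 T2 lf2 ll2 q hq' y w Hy) as [P1 P2].
  destruct (ip_S_ev_l E1 root1 T1 lf1 ll1 q hq' z v Hz) as [Q1 Q2].
  rewrite (depth_G E1 root1 T1 lf1 n v Hv) in Q1, Q2.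
  rewrite <- Ez in P1, P2. unfold y in P1, P2.
  rewrite !Uint_f in P1 by (auto; apply ev_l2). rewrite !Uint_f in P2 by (auto; apply ev_l2).
  rewrite UipR in P1 by (apply S_l2; auto; apply ev_l2). rewrite UipI in P2 by (apply S_l2; auto; apply ev_l2).
  rewrite Q1 in P1. rewrite Q2 in P2. fold y in P1, P2, R1, R2. rewrite R1 in P1. rewrite R2 in P2.
  assert (Hc : cc q (depth E2 root2 w) <> cc q n) by (intros H; apply Hw; eapply cc_inj; eauto).
  destruct (y w) as [a b] eqn:Hyw. simpl in *. unfold C0. f_equal.
  - assert ((cc q (depth E2 root2 w) - cc q n) * a = 0) by nra.
    apply Rmult_integral in H. destruct H; [exfalso; apply Hc; lra|auto].
  - assert ((cc q (depth E2 root2 w) - cc q n) * b = 0) by nra.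
    apply Rmult_integral in H. destruct H; [exfalso; apply Hc; lra|auto].
Qed.

Lemma supp_Uinv n w f v : In w (G E2 root2 n) -> in_l2 f -> (forall u, U f u = ev w u) ->
  depth E1 root1 v <> n -> f v = C0.
Proof.
  intros Hw Hf Hfw Hv. destruct (coef_rel v w f Hf Hfw) as [R1 R2].
  assert (Ef : U f = ev w) by (apply functional_extensionality; auto).
  set (y := U (ev v)).
  assert (Hy : in_l2 y) by (apply Ul2, ev_l2).
  destruct (ip_S_ev_r E1 root1 T1 lf1 ll1 q hq' f v Hf) as [P1 P2].
  destruct (ip_S_ev_l E2 root2 T2 lf2 ll2 q hq' y w Hy) as [Q1 Q2].
  rewrite (depth_G E2 root2 T2 lf2 n w Hw) in Q1, Q2.
  rewrite <- UipR in P1 by (apply S_l2; auto; apply ev_l2). rewrite <- UipI in P2 by (apply S_l2; auto; apply ev_l2).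
  rewrite <- !Uint_f in P1 by (auto; apply ev_l2). rewrite <- !Uint_f in P2 by (auto; apply ev_l2).
  rewrite Ef in P1, P2. fold y in P1, P2, R1, R2. rewrite Q1 in P1. rewrite Q2 in P2.
  rewrite <- R1 in P1. assert (Hyw : Cim (y w) = - Cim (f v)) by lra. rewrite Hyw in P2.
  assert (Hc : cc q (depth E1 root1 v) <> cc q n) by (intros H; apply Hv; eapply cc_inj; eauto).
  destruct (f v) as [a b] eqn:Hfv. simpl in *. unfold C0. f_equal.
  - assert ((cc q (depth E1 root1 v) - cc q n) * a = 0) by nra.
    apply Rmult_integral in H. destruct H; [exfalso; apply Hc; lra|auto].
  - assert ((cc q (depth E1 root1 v) - cc q n) * b = 0) by nra.
    apply Rmult_integral in H. destruct H; [exfalso; apply Hc; lra|auto].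
Qed.

Lemma norm_Uev n v : In v (G E1 root1 n) -> sumsq (U (ev v)) (G E2 root2 n) = 1.
Proof.
  intros Hv. apply (sqnorm_unique (U (ev v))).
  - apply sqnorm_supp. apply G_nodup; auto. intros u Hu. apply (supp_U n); auto.
    intros Hd. apply Hu. rewrite <- Hd. apply in_G_depth; auto.
  - apply Uiso. apply ev_l2. apply ev_sq.
Qed.

Lemma norm_finv n w f : In w (G E2 root2 n) -> in_l2 f -> (forall u, U f u = ev w u) ->
  sumsq f (G E1 root1 n) = 1.
Proof.
  intros Hw Hf Hfw. assert (Ef : U f = ev w) by (apply functional_extensionality; auto).
  apply (sqnorm_unique f).
  - apply sqnorm_supp. apply G_nodup; auto. intros u Hu. apply (supp_Uinv n w); auto.
    intros Hd. apply Hu. rewrite <- Hd. apply in_G_depth; auto.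
  - pose proof (Uiso f (Nrm f) Hf (l2_sqnorm f Hf)). rewrite Ef in H.
    assert (Nrm f = 1) by (apply (sqnorm_unique _ _ _ H (ev_sq w))). rewrite <- H0. apply l2_sqnorm; auto.
Qed.

Lemma fwd_card n : length (G E1 root1 n) = length (G E2 root2 n).
Proof.
  set (fw := fun w => epsilon (inhabits (fun _ : V1 => C0)) (fun f => in_l2 f /\ forall u, U f u = ev w u)).
  assert (Hfw : forall w, in_l2 (fw w) /\ forall u, U (fw w) u = ev w u).
  { intros w. unfold fw. apply epsilon_spec. apply Usurj, ev_l2. }
  apply INR_eq.
  rewrite <- (Rmult_1_r (INR (length (G E1 root1 n)))), <- (Rmult_1_r (INR (length (G E2 root2 n)))).
  rewrite <- !lsum_const.
  rewrite (lsum_ext (fun _ => 1) (fun v => lsum (fun w => Cnorm2 (U (ev v) w)) (G E2 root2 n))).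
  rewrite (lsum_ext (fun _ => 1) (fun w => lsum (fun v => Cnorm2 (fw w v)) (G E1 root1 n)) (G E2 root2 n)).
  rewrite lsum_swap. apply lsum_ext. intros w Hw. apply lsum_ext. intros v Hv.
  destruct (Hfw w) as [H1 H2]. destruct (coef_rel v w (fw w) H1 H2) as [R1 R2].
  unfold Cnorm2. rewrite R1, R2. ring.
  - intros w Hw. destruct (Hfw w). symmetry. apply (norm_finv n w); auto.
  - intros v Hv. symmetry. apply (norm_Uev n v Hv).
Qed.

End Fwd.
Lemma list_sum_filter0 {A} (h : A -> nat) (p : A -> bool) l :
  (forall x, p x = false -> h x = 0%nat) -> list_sum (map h (filter p l)) = list_sum (map h l).
Proof. intros H. induction l; simpl; auto. destruct (p a) eqn:E; simpl; rewrite IHl; auto. rewrite H; auto. Qed.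

Section Branch.
Context {V : Type} (E : V -> V -> Prop) (root : V).
Hypothesis T : rooted_directed_tree E root.
Hypothesis lf : locally_finite E.
Hypothesis ll : leafless E.

Lemma sum_card_G (l : list V) :
  (list_sum (map (fun v => (card_chi E v - 1)%nat) l) + length l = length (flat_map (chl E) l))%nat.
Proof.
  induction l; simpl; auto. rewrite length_app, <- card_chl by auto. pose proof (card_pos E lf ll a).
  lia.
Qed.

Lemma branching_G n : (branching_sum E root n + length (G E root n) = length (G E root (S n)))%nat.
Proof.
  set (h := fun v => (card_chi E v - 1)%nat).
  set (l0 := filter (fun v => Nat.leb 2 (card_chi E v)) (G E root n)).
  assert (H0 : NoDup l0 /\ (forall v, In v l0 <-> (gen E root n v /\ (2 <= card_chi E v)%nat))).
  { split. apply NoDup_filter, G_nodup; auto. intros v. unfold l0. rewrite filter_In, G_gen by auto.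
    rewrite Nat.leb_le. tauto. }
  unfold branching_sum.
  assert (Hex : exists s, exists l, NoDup l /\
       (forall v, In v l <-> (gen E root n v /\ (2 <= card_chi E v)%nat)) /\
       s = list_sum (map (fun v => (card_chi E v - 1)%nat) l)).
  { exists (list_sum (map h l0)), l0. destruct H0. auto. }
  destruct (epsilon_spec (inhabits 0%nat) _ Hex) as [l [Hl [Hm ->]]].
  fold h. assert (Hp : Permutation l l0).
  { apply NoDup_Permutation; auto. apply H0. intros x. rewrite Hm. symmetry. apply H0. }
  rewrite (Permutation_list_sum (Permutation_map h Hp)).
  unfold l0. rewrite list_sum_filter0.
  - unfold h. rewrite sum_card_G. reflexivity.
  - intros x Hx. apply Nat.leb_gt in Hx. unfold h. lia.
Qed.

End Branch.
Lemma lsum_nonneg_zero {A} (f : A -> R) l : (forall x, In x l -> 0 <= f x) -> lsum f l = 0 ->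
  forall x, In x l -> f x = 0.
Proof.
  induction l; intros H0 Hs x Hx; [destruct Hx|]. rewrite lsum_cons in Hs.
  assert (0 <= f a) by (apply H0; left; auto).
  assert (0 <= lsum f l) by (apply lsum_nonneg; intros; apply H0; right; auto).
  destruct Hx as [<-|Hx]. lra. apply IHl; auto. intros; apply H0; right; auto. lra.
Qed.

Definition dotL {V} (L : list V) (f g : V -> R) : R := lsum (fun u => f u * g u) L.
Definition ind {V} (w : V) : V -> R := fun u => if deq u w then 1 else 0.

Lemma dotL_ind_r {V} (L : list V) f w : NoDup L -> In w L -> dotL L f (ind w) = f w.
Proof. intros. unfold dotL, ind. rewrite <- (lsum_delta' f L w) by auto. apply lsum_ext.
  intros x _. destruct (deq x w); ring. Qed.

Section FinON.
Context {V : Type} (L : list V) (HL : NoDup L) (m : nat) (b : nat -> V -> R).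
Hypothesis ON : forall i j, (i < m)%nat -> (j < m)%nat -> dotL L (b i) (b j) = if deq i j then 1 else 0.

Definition combv (d : nat -> R) : V -> R := fun u => lsum (fun j => b j u * d j) (seq 0 m).

Lemma coef_comb d i : (i < m)%nat -> dotL L (b i) (combv d) = d i.
Proof.
  intros Hi. unfold dotL, combv.
  rewrite (lsum_ext _ (fun u => lsum (fun j => b i u * b j u * d j) (seq 0 m))).
  2:{ intros u _. rewrite <- lsum_scal. apply lsum_ext; intros; ring. }
  rewrite lsum_swap.
  rewrite (lsum_ext _ (fun j => if deq i j then d j else 0)).
  apply lsum_delta. apply seq_NoDup. apply in_seq; lia.
  intros j Hj. apply in_seq in Hj. cbv beta. rewrite (lsum_scal_r (d j) (fun x => b i x * b j x)). fold (dotL L (b i) (b j)).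
  rewrite ON by lia. destruct (deq i j); ring.
Qed.

Lemma quad_ON d : dotL L (combv d) (combv d) = lsum (fun i => d i * d i) (seq 0 m).
Proof.
  unfold dotL at 1. unfold combv at 1.
  rewrite (lsum_ext _ (fun u => lsum (fun j => d j * (b j u * combv d u)) (seq 0 m))).
  2:{ intros u _. rewrite <- (lsum_scal_r (combv d u)). apply lsum_ext; intros; ring. }
  rewrite lsum_swap. apply lsum_ext. intros j Hj. apply in_seq in Hj.
  rewrite lsum_scal. fold (dotL L (b j) (combv d)). rewrite coef_comb by lia. ring.
Qed.

Lemma dot_x_comb x : dotL L x (combv (fun i => dotL L (b i) x)) =
  lsum (fun i => dotL L (b i) x * dotL L (b i) x) (seq 0 m).
Proof.
  unfold dotL at 1. unfold combv.
  rewrite (lsum_ext _ (fun u => lsum (fun j => dotL L (b j) x * (b j u * x u)) (seq 0 m))).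
  2:{ intros u _. rewrite <- lsum_scal. apply lsum_ext; intros; ring. }
  rewrite lsum_swap. apply lsum_ext. intros j _. rewrite lsum_scal. reflexivity.
Qed.

Lemma bessel x : lsum (fun i => dotL L (b i) x * dotL L (b i) x) (seq 0 m) <= dotL L x x.
Proof.
  set (c := fun i => dotL L (b i) x).
  assert (H : 0 <= dotL L (fun u => x u - combv c u) (fun u => x u - combv c u)).
  { unfold dotL. apply lsum_nonneg. intros y _. apply Rle_0_sqr. }
  assert (E : dotL L (fun u => x u - combv c u) (fun u => x u - combv c u) =
    dotL L x x - 2 * dotL L x (combv c) + dotL L (combv c) (combv c)).
  { unfold dotL. rewrite <- lsum_scal, <- lsum_minus, <- lsum_plus. apply lsum_ext; intros; ring. }
  rewrite E, quad_ON in H. unfold c in H. rewrite dot_x_comb in H. unfold c. lra.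
Qed.

Hypothesis Hm : m = length L.

Lemma diag_le u : In u L -> lsum (fun i => b i u * b i u) (seq 0 m) <= 1.
Proof.
  intros Hu. pose proof (bessel (ind u)).
  rewrite (lsum_ext _ (fun i => b i u * b i u)) in H.
  rewrite dotL_ind_r in H by auto. unfold ind in H. destruct (deq u u); [lra|congruence].
  intros i _. rewrite dotL_ind_r; auto.
Qed.

Lemma diag_eq u : In u L -> lsum (fun i => b i u * b i u) (seq 0 m) = 1.
Proof.
  assert (Hs : lsum (fun u => 1 - lsum (fun i => b i u * b i u) (seq 0 m)) L = 0).
  { rewrite lsum_minus, lsum_swap.
    rewrite (lsum_ext (fun i => lsum (fun x => b i x * b i x) L) (fun _ => 1)).
    rewrite !lsum_const, length_seq, Hm. ring.
    intros i Hi. apply in_seq in Hi. fold (dotL L (b i) (b i)). rewrite ON by lia.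
    destruct (deq i i); congruence. }
  intros Hu. assert (Hn : forall x, In x L -> 0 <= 1 - lsum (fun i => b i x * b i x) (seq 0 m)).
  { intros x Hx. pose proof (diag_le x Hx). lra. }
  pose proof (lsum_nonneg_zero _ L Hn Hs u Hu). cbv beta in H. lra.
Qed.

Lemma offdiag u w : In u L -> In w L -> u <> w -> lsum (fun i => b i u * b i w) (seq 0 m) = 0.
Proof.
  intros Hu Hw Huw.
  assert (K : forall t, lsum (fun i => (b i u + t * b i w) * (b i u + t * b i w)) (seq 0 m) <= 1 + t * t).
  { intros t. pose proof (bessel (fun v => ind u v + t * ind w v)).
    assert (E1 : forall i, dotL L (b i) (fun v => ind u v + t * ind w v) = b i u + t * b i w).
    { intros i. unfold dotL. rewrite (lsum_ext _ (fun v => b i v * ind u v + t * (b i v * ind w v))) by (intros; cbv beta; ring).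
      rewrite lsum_plus, (lsum_scal t (fun v => b i v * ind w v)). fold (dotL L (b i) (ind u)). fold (dotL L (b i) (ind w)).
      rewrite !dotL_ind_r; auto. }
    assert (E2 : dotL L (fun v => ind u v + t * ind w v) (fun v => ind u v + t * ind w v) = 1 + t * t).
    { unfold dotL. rewrite (lsum_ext _ (fun v => (ind u v * ind u v + 2 * t * ind w v * ind u v) + t * t * (ind w v * ind w v))).
      rewrite lsum_plus, lsum_plus, (lsum_scal (t * t) (fun v => ind w v * ind w v)).
      fold (dotL L (ind u) (ind u)). fold (dotL L (ind w) (ind w)).
      rewrite (lsum_ext (fun v => 2 * t * ind w v * ind u v) (fun _ => 0)).
      rewrite lsum_zero. rewrite !dotL_ind_r; auto. unfold ind. destruct (deq u u), (deq w w); try congruence. ring.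
      intros v _. unfold ind. destruct (deq v w), (deq v u); try ring. subst; congruence.
      intros v _. ring. }
    rewrite E2 in H. rewrite (lsum_ext _ (fun i => (b i u + t * b i w) * (b i u + t * b i w))) in H; auto.
    intros; rewrite E1; auto. }
  assert (X : forall t, lsum (fun i => (b i u + t * b i w) * (b i u + t * b i w)) (seq 0 m) =
     lsum (fun i => b i u * b i u) (seq 0 m) + 2 * t * lsum (fun i => b i u * b i w) (seq 0 m)
     + t * t * lsum (fun i => b i w * b i w) (seq 0 m)).
  { intros t. rewrite <- !lsum_scal, <- !lsum_plus. apply lsum_ext; intros; ring. }
  pose proof (K 1). pose proof (K (-1)). rewrite X in H, H0. rewrite !diag_eq in H, H0 by auto. lra.
Qed.

Lemma complete u w : In u L -> In w L ->
  lsum (fun i => b i u * b i w) (seq 0 m) = if deq u w then 1 else 0.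
Proof. intros Hu Hw. destruct (deq u w) as [e|n]. rewrite <- e. apply diag_eq; auto. apply offdiag; auto. Qed.

End FinON.
Definition zf {V} : V -> R := fun _ => 0.

Definition ONl {V} (L : list V) (l : list (V -> R)) : Prop :=
  forall i j, (i < length l)%nat -> (j < length l)%nat ->
    dotL L (nth i l zf) (nth j l zf) = if deq i j then 1 else 0.

Lemma dotL_sym {V} (L : list V) f g : dotL L f g = dotL L g f.
Proof. unfold dotL. apply lsum_ext; intros; ring. Qed.

Lemma ONl_app {V} (L : list V) l1 l2 : ONl L l1 -> ONl L l2 ->
  (forall x y, In x l1 -> In y l2 -> dotL L x y = 0) -> ONl L (l1 ++ l2).
Proof.
  intros H1 H2 H12 i j Hi Hj. rewrite length_app in Hi, Hj.
  destruct (Nat.ltb_spec i (length l1)), (Nat.ltb_spec j (length l1)).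
  - rewrite !app_nth1 by auto. apply H1; auto.
  - rewrite app_nth1, app_nth2 by auto. rewrite H12. destruct (deq i j); auto; lia.
    apply nth_In; auto. apply nth_In; lia.
  - rewrite app_nth2, app_nth1 by auto. rewrite dotL_sym, H12. destruct (deq i j); auto; lia.
    apply nth_In; auto. apply nth_In; lia.
  - rewrite !app_nth2 by auto. rewrite (H2 (i - length l1)%nat (j - length l1)%nat) by lia. destruct (deq (i - length l1)%nat (j - length l1)%nat), (deq i j); auto; lia.
Qed.

Lemma ONl_map {V} (L L' : list V) (W : (V -> R) -> (V -> R)) l :
  (forall x y, In x l -> In y l -> dotL L' (W x) (W y) = dotL L x y) -> ONl L l -> ONl L' (map W l).
Proof.
  intros HW H i j Hi Hj. rewrite length_map in Hi, Hj.
  rewrite (nth_indep _ zf (W zf)) by (rewrite length_map; auto).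
  rewrite (nth_indep _ zf (W zf) (n := j)) by (rewrite length_map; auto).
  rewrite !map_nth. rewrite HW by (apply nth_In; auto). apply H; auto.
Qed.

Lemma ONl_flat_map {V A} (L : list V) (f : A -> list (V -> R)) (l : list A) :
  NoDup l -> (forall a, In a l -> ONl L (f a)) ->
  (forall a a' x y, In a l -> In a' l -> a <> a' -> In x (f a) -> In y (f a') -> dotL L x y = 0) ->
  ONl L (flat_map f l).
Proof.
  induction 1 as [|a l Ha Hl IH]; intros Hf Hc.
  - intros i j Hi. simpl in Hi. lia.
  - simpl. apply ONl_app. apply Hf; left; auto. apply IH. intros; apply Hf; right; auto.
    intros; eapply Hc; eauto; right; auto.
    intros x y Hx Hy. apply in_flat_map in Hy. destruct Hy as [a' [Ha' Hy]].
    apply (Hc a a' x y); auto. left; auto. right; auto. intros ->; contradiction.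
Qed.

Lemma seq_split k j : (j < k)%nat -> seq 0 k = seq 0 j ++ j :: seq (S j) (k - S j).
Proof.
  intros H. replace k with (j + (S (k - S j)))%nat at 1 by lia. rewrite seq_app. reflexivity.
Qed.

Definition rj (j : nat) : R := / sqrt (INR j * INR (S j)).
Definition hx (j s : nat) : R :=
  if Nat.ltb s j then rj j else if Nat.eqb s j then - INR j * rj j else 0.

Lemma rj_sq j : (1 <= j)%nat -> rj j * rj j = / (INR j * INR (S j)).
Proof.
  intros H. unfold rj. assert (0 < INR j * INR (S j)).
  { apply Rmult_lt_0_compat; apply lt_0_INR; lia. }
  rewrite <- Rinv_mult. rewrite sqrt_sqrt; lra.
Qed.

Lemma hx_sum j k : (1 <= j)%nat -> (j < k)%nat -> lsum (hx j) (seq 0 k) = 0.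
Proof.
  intros H1 H2. rewrite (seq_split k j H2), lsum_app, lsum_cons.
  rewrite (lsum_ext _ (fun _ => rj j)), lsum_const, length_seq.
  rewrite (lsum_ext (hx j) (fun _ => 0)), lsum_zero.
  unfold hx. rewrite Nat.ltb_irrefl, Nat.eqb_refl. ring.
  intros s Hs. apply in_seq in Hs. unfold hx. destruct (Nat.ltb_spec s j); [lia|].
  destruct (Nat.eqb_spec s j); [lia|auto].
  intros s Hs. apply in_seq in Hs. unfold hx. destruct (Nat.ltb_spec s j); [auto|lia].
Qed.

Lemma hx_ortho i j k : (1 <= i)%nat -> (i < j)%nat -> (j < k)%nat ->
  lsum (fun s => hx i s * hx j s) (seq 0 k) = 0.
Proof.
  intros H1 H2 H3. rewrite (lsum_ext _ (fun s => hx i s * rj j)).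
  rewrite lsum_scal_r, hx_sum by lia. ring.
  intros s _. unfold hx at 2. destruct (Nat.ltb_spec s j). auto.
  unfold hx. destruct (Nat.ltb_spec s i); [lia|]. destruct (Nat.eqb_spec s i); [lia|]. ring.
Qed.

Lemma hx_norm j k : (1 <= j)%nat -> (j < k)%nat ->
  lsum (fun s => hx j s * hx j s) (seq 0 k) = 1.
Proof.
  intros H1 H2. rewrite (seq_split k j H2), lsum_app, lsum_cons.
  rewrite (lsum_ext _ (fun _ => rj j * rj j)), lsum_const, length_seq.
  rewrite (lsum_ext (fun s => hx j s * hx j s) (fun _ => 0)), lsum_zero.
  unfold hx. rewrite Nat.ltb_irrefl, Nat.eqb_refl.
  replace (INR j * (rj j * rj j) + (- INR j * rj j * (- INR j * rj j) + 0))
    with ((INR j * INR (S j)) * (rj j * rj j)) by (rewrite S_INR; ring).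
  rewrite rj_sq by auto. apply Rinv_r. apply Rmult_integral_contrapositive_currified; apply not_0_INR; lia.
  intros s Hs. apply in_seq in Hs. unfold hx. destruct (Nat.ltb_spec s j); [lia|].
  destruct (Nat.eqb_spec s j); [lia|ring].
  intros s Hs. apply in_seq in Hs. unfold hx. destruct (Nat.ltb_spec s j); [auto|lia].
Qed.

Lemma hx_dot i j k : (1 <= i)%nat -> (i < k)%nat -> (1 <= j)%nat -> (j < k)%nat ->
  lsum (fun s => hx i s * hx j s) (seq 0 k) = if deq i j then 1 else 0.
Proof.
  intros. destruct (deq i j). subst; apply hx_norm; auto.
  destruct (Nat.lt_ge_cases i j). apply hx_ortho; auto.
  rewrite (lsum_ext _ (fun s => hx j s * hx i s)). apply hx_ortho; auto; lia. intros; ring.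
Qed.

Fixpoint idx {V} (l : list V) (u : V) : nat :=
  match l with [] => O | a :: l => if deq a u then O else S (idx l u) end.

Lemma lsum_idx {V} (F : nat -> R) (c : list V) : NoDup c ->
  lsum (fun u => F (idx c u)) c = lsum F (seq 0 (length c)).
Proof.
  intros Hc. revert F. induction Hc as [|a c Ha Hc IH]; intros F; auto.
  change (length (a :: c)) with (S (length c)). change (seq 0 (S (length c))) with (0%nat :: seq 1 (length c)).
  rewrite !lsum_cons. simpl idx at 1. destruct (deq a a); [|congruence]. f_equal.
  rewrite <- seq_shift, lsum_map. rewrite <- (IH (fun s => F (S s))). apply lsum_ext.
  intros u Hu. simpl idx. destruct (deq a u); auto. subst; contradiction.
Qed.
Section Basis.
Context {V : Type} (E : V -> V -> Prop) (root : V).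
Hypothesis T : rooted_directed_tree E root.
Hypothesis lf : locally_finite E.
Hypothesis ll : leafless E.

Definition kk (v : V) : R := INR (length (chl E v)).

Lemma kk_pos v : 0 < kk v.
Proof. unfold kk. rewrite <- card_chl by auto. apply lt_0_INR. pose proof (card_pos E lf ll v). lia. Qed.

Definition Wop (b : V -> R) : V -> R := fun u => b (parent E root u) / sqrt (kk (parent E root u)).
Definition hv (v : V) (j : nat) : V -> R :=
  fun u => if excluded_middle_informative (In u (chl E v)) then hx j (idx (chl E v) u) else 0.
Definition Hv (v : V) : list (V -> R) := map (hv v) (seq 1 (length (chl E v) - 1)).
Definition Hl (n : nat) : list (V -> R) := flat_map Hv (G E root n).
Fixpoint Bl (n : nat) : list (V -> R) :=
  match n with O => [ind root] | S n => map Wop (Bl n) ++ Hl n end.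

Lemma dot_GS n f g : dotL (G E root (S n)) f g = lsum (fun v => dotL (chl E v) f g) (G E root n).
Proof. unfold dotL. simpl G. rewrite lsum_flat_map. reflexivity. Qed.

Lemma chl_disj v v' u : In u (chl E v) -> In u (chl E v') -> v = v'.
Proof. intros H1 H2. rewrite <- (chl_parent E root T lf v u H1). apply chl_parent; auto. Qed.

Lemma Wop_chl b v u : In u (chl E v) -> Wop b u = b v / sqrt (kk v).
Proof. intros H. unfold Wop. rewrite (chl_parent E root T lf v u H). reflexivity. Qed.

Lemma sqrt_kk v : sqrt (kk v) * sqrt (kk v) = kk v.
Proof. apply sqrt_sqrt. pose proof (kk_pos v); lra. Qed.

Lemma dot_W n b b' : dotL (G E root (S n)) (Wop b) (Wop b') = dotL (G E root n) b b'.
Proof.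
  rewrite dot_GS. unfold dotL at 2. apply lsum_ext. intros v Hv. unfold dotL.
  rewrite (lsum_ext _ (fun _ => b v * b' v / kk v)).
  rewrite lsum_const. fold (kk v). pose proof (kk_pos v). field. lra.
  intros u Hu. rewrite !(Wop_chl _ v u Hu). pose proof (kk_pos v). pose proof (sqrt_kk v).
  assert (0 < sqrt (kk v)) by (apply sqrt_lt_R0; auto).
  set (s := sqrt (kk v)) in *. rewrite <- H0. field. lra.
Qed.

Lemma hv_out v j u : ~ In u (chl E v) -> hv v j u = 0.
Proof. intros H. unfold hv. destruct (excluded_middle_informative _); tauto. Qed.

Lemma Hv_in v h : In h (Hv v) -> exists j, (1 <= j)%nat /\ (j < length (chl E v))%nat /\ h = hv v j.
Proof. unfold Hv. intros H. apply in_map_iff in H. destruct H as [j [<- Hj]]. apply in_seq in Hj.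
  exists j. repeat split; lia. Qed.

Lemma Hv_sum v h v' : In h (Hv v) -> lsum h (chl E v') = 0.
Proof.
  intros Hh. destruct (Hv_in v h Hh) as [j [H1 [H2 ->]]]. destruct (deq v v').
  - subst v'. rewrite (lsum_ext _ (fun u => hx j (idx (chl E v) u))).
    rewrite (lsum_idx (hx j)) by apply chl_nodup, lf. apply hx_sum; auto.
    intros u Hu. unfold hv. destruct (excluded_middle_informative _); tauto.
  - rewrite (lsum_ext _ (fun _ => 0)). apply lsum_zero.
    intros u Hu. apply hv_out. intros Hu'. apply n. apply (chl_disj v v' u); auto.
Qed.

Lemma dot_W_H n b h : In h (Hl n) -> dotL (G E root (S n)) (Wop b) h = 0.
Proof.
  intros Hh. apply in_flat_map in Hh. destruct Hh as [v [Hv Hh]].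
  rewrite dot_GS. rewrite (lsum_ext _ (fun _ => 0)). apply lsum_zero.
  intros v' Hv'. unfold dotL. rewrite (lsum_ext _ (fun u => b v' / sqrt (kk v') * h u)).
  rewrite (lsum_scal (b v' / sqrt (kk v')) h). rewrite (Hv_sum v h v' Hh). ring.
  intros u Hu. rewrite (Wop_chl b v' u Hu). reflexivity.
Qed.

Lemma dot_supp n v f g : In v (G E root n) -> (forall u, ~ In u (chl E v) -> f u = 0) ->
  dotL (G E root (S n)) f g = dotL (chl E v) f g.
Proof.
  intros Hv Hf. rewrite dot_GS.
  rewrite (lsum_ext _ (fun v' => if deq v v' then dotL (chl E v') f g else 0)).
  apply (lsum_delta (fun v0 => dotL (chl E v0) f g)); auto. apply G_nodup; auto.
  intros v' _. destruct (deq v v'); auto. unfold dotL. rewrite (lsum_ext _ (fun _ => 0)).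
  apply lsum_zero. intros u Hu. rewrite Hf. ring. intros Hu'. apply n0. eapply chl_disj; eauto.
Qed.

Lemma nth_Hv v i : (i < length (chl E v) - 1)%nat -> nth i (Hv v) zf = hv v (S i).
Proof.
  intros H. unfold Hv. rewrite (nth_indep _ zf (hv v 0)) by (rewrite length_map, length_seq; auto).
  rewrite map_nth, seq_nth by auto. reflexivity.
Qed.

Lemma ON_Hv n v : In v (G E root n) -> ONl (G E root (S n)) (Hv v).
Proof.
  intros HvG i j Hi Hj. unfold Hv in Hi, Hj. rewrite length_map, length_seq in Hi, Hj.
  rewrite !nth_Hv by auto. rewrite (dot_supp n v) by (auto; intros; apply hv_out; auto).
  unfold dotL. rewrite (lsum_ext _ (fun u => (fun s => hx (S i) s * hx (S j) s) (idx (chl E v) u))).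
  rewrite (lsum_idx (fun s => hx (S i) s * hx (S j) s)) by apply chl_nodup, lf. rewrite hx_dot by lia.
  destruct (deq (S i) (S j)), (deq i j); auto; lia.
  intros u Hu. unfold hv. destruct (excluded_middle_informative _); tauto.
Qed.

Lemma ON_Hl n : ONl (G E root (S n)) (Hl n).
Proof.
  apply ONl_flat_map. apply G_nodup; auto. intros; apply (ON_Hv n); auto.
  intros a a' x y Ha Ha' Hne Hx Hy. destruct (Hv_in a x Hx) as [j [_ [_ ->]]].
  destruct (Hv_in a' y Hy) as [j' [_ [_ ->]]].
  unfold dotL. rewrite (lsum_ext _ (fun _ => 0)). apply lsum_zero.
  intros u _. destruct (excluded_middle_informative (In u (chl E a))).
  - rewrite (hv_out a' j' u). ring. intros H. apply Hne. eapply chl_disj; eauto.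
  - rewrite hv_out by auto. ring.
Qed.

Lemma ON_Bl n : ONl (G E root n) (Bl n).
Proof.
  induction n.
  - intros i j Hi Hj. simpl in Hi, Hj. assert (i = 0%nat) by lia. assert (j = 0%nat) by lia. subst.
    simpl. unfold dotL, ind. simpl. destruct (deq root root), (deq 0%nat 0%nat); try congruence. ring.
  - simpl Bl. apply ONl_app. apply (ONl_map (G E root n)); auto. intros; apply dot_W. apply ON_Hl.
    intros x y Hx Hy. apply in_map_iff in Hx. destruct Hx as [b [<- _]]. apply dot_W_H; auto.
Qed.

Lemma len_Bl n : length (Bl n) = length (G E root n).
Proof.
  induction n; auto. simpl Bl. rewrite length_app, length_map, IHn. unfold Hl.
  rewrite length_flat_map. simpl G. rewrite <- (sum_card_G E lf ll (G E root n)).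
  rewrite Nat.add_comm. f_equal. f_equal. apply map_ext. intros v. unfold Hv.
  rewrite length_map, length_seq, card_chl by auto. reflexivity.
Qed.

Definition bb (n i : nat) : V -> R := nth i (Bl n) zf.
Definition mm (n : nat) : nat := length (G E root n).

Lemma bb_ON n i j : (i < mm n)%nat -> (j < mm n)%nat ->
  dotL (G E root n) (bb n i) (bb n j) = if deq i j then 1 else 0.
Proof. unfold mm, bb. rewrite <- len_Bl. apply ON_Bl. Qed.

Lemma bb_complete n u w : In u (G E root n) -> In w (G E root n) ->
  lsum (fun i => bb n i u * bb n i w) (seq 0 (mm n)) = if deq u w then 1 else 0.
Proof. intros. apply (complete (G E root n) (G_nodup E root T lf n) (mm n) (bb n)); auto. apply bb_ON. Qed.

Lemma mm_le n : (mm n <= mm (S n))%nat.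
Proof. unfold mm. rewrite <- !len_Bl. simpl Bl. rewrite length_app, length_map. lia. Qed.

Lemma bb_S_lt n i : (i < mm n)%nat -> bb (S n) i = Wop (bb n i).
Proof.
  intros H. unfold bb, mm in *. rewrite <- len_Bl in H. simpl Bl. rewrite app_nth1 by (rewrite length_map; auto).
  rewrite (nth_indep _ zf (Wop zf)) by (rewrite length_map; auto). rewrite map_nth. reflexivity.
Qed.

Lemma bb_S_ge n i : (mm n <= i)%nat -> (i < mm (S n))%nat -> In (bb (S n) i) (Hl n).
Proof.
  intros H1 H2. unfold bb, mm in *. rewrite <- !len_Bl in *. simpl Bl in *. rewrite length_app, length_map in H2.
  rewrite app_nth2 by (rewrite length_map; auto). apply nth_In. rewrite length_map. lia.
Qed.

Variable q : R.
Hypothesis hq : 1 <= q.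

Definition Sr (g : V -> R) : V -> R :=
  fun u => if excluded_middle_informative (exists v, E v u)
           then dirichlet_weight E root q u * g (parent E root u) else 0.

Lemma Sr_chl g v u : In u (chl E v) -> Sr g u = lam E root q v * g v.
Proof.
  intros H. unfold Sr. destruct (excluded_middle_informative _) as [_|n].
  - rewrite (weight_chl E root T lf q v u H), (chl_parent E root T lf v u H). reflexivity.
  - exfalso. apply n. exists v. apply chl_E; auto.
Qed.

Lemma Sr_root g : Sr g root = 0.
Proof. unfold Sr. destruct (excluded_middle_informative _) as [[v Hv]|]; auto.
  exfalso; eapply no_parent_root; eauto. Qed.

Lemma Sr_re f u : Cre (dirichlet_shift E root q f u) = Sr (fun v => Cre (f v)) u.
Proof. unfold dirichlet_shift, Sr. destruct (excluded_middle_informative _); reflexivity. Qed.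
Lemma Sr_im f u : Cim (dirichlet_shift E root q f u) = Sr (fun v => Cim (f v)) u.
Proof. unfold dirichlet_shift, Sr. destruct (excluded_middle_informative _); reflexivity. Qed.

Lemma dot_Sr_G0 b g : dotL (G E root 0) b (Sr g) = 0.
Proof. unfold dotL. simpl. rewrite Sr_root. ring. Qed.

Lemma lam_eq n v : In v (G E root n) -> lam E root q v = / sqrt (kk v) * sqrt (cc q n).
Proof. intros H. unfold lam, kk. rewrite card_chl, (depth_G E root T lf n v H) by auto. reflexivity. Qed.

Lemma dot_W_Sr n b g : dotL (G E root (S n)) (Wop b) (Sr g) = sqrt (cc q n) * dotL (G E root n) b g.
Proof.
  rewrite dot_GS. unfold dotL at 2. rewrite <- lsum_scal. apply lsum_ext. intros v Hv. unfold dotL.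
  rewrite (lsum_ext _ (fun _ => b v / sqrt (kk v) * (/ sqrt (kk v) * sqrt (cc q n) * g v))).
  rewrite lsum_const. fold (kk v). pose proof (kk_pos v). pose proof (sqrt_kk v).
  assert (0 < sqrt (kk v)) by (apply sqrt_lt_R0; auto).
  replace (kk v * (b v / sqrt (kk v) * (/ sqrt (kk v) * sqrt (cc q n) * g v)))
    with (kk v / (sqrt (kk v) * sqrt (kk v)) * (sqrt (cc q n) * (b v * g v))) by (field; lra).
  rewrite H0. field. lra.
  intros u Hu. rewrite (Wop_chl b v u Hu), (Sr_chl g v u Hu), (lam_eq n v Hv). reflexivity.
Qed.

Lemma dot_H_Sr n h g : In h (Hl n) -> dotL (G E root (S n)) h (Sr g) = 0.
Proof.
  intros Hh. apply in_flat_map in Hh. destruct Hh as [v [Hv Hh]].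
  rewrite dot_GS. rewrite (lsum_ext _ (fun _ => 0)). apply lsum_zero.
  intros v' Hv'. unfold dotL. rewrite (lsum_ext _ (fun u => h u * (lam E root q v' * g v'))).
  rewrite (lsum_scal_r (lam E root q v' * g v') h). rewrite (Hv_sum v h v' Hh). ring.
  intros u Hu. rewrite (Sr_chl g v' u Hu). reflexivity.
Qed.

End Basis.
Section FinC.
Context {V : Type} (L : list V) (HL : NoDup L) (m : nat) (b : nat -> V -> R).
Hypothesis CP : forall u w, In u L -> In w L ->
  lsum (fun i => b i u * b i w) (seq 0 m) = if deq u w then 1 else 0.

Lemma reconstruct h u : In u L -> lsum (fun i => b i u * dotL L (b i) h) (seq 0 m) = h u.
Proof.
  intros Hu. unfold dotL.
  rewrite (lsum_ext _ (fun i => lsum (fun w => b i u * b i w * h w) L)).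
  2:{ intros i _. rewrite <- lsum_scal. apply lsum_ext; intros; ring. }
  rewrite lsum_swap.
  rewrite (lsum_ext _ (fun w => if deq u w then h w else 0)).
  apply (lsum_delta h); auto.
  intros w Hw. rewrite (lsum_scal_r (h w) (fun i => b i u * b i w)). rewrite CP by auto.
  destruct (deq u w); ring.
Qed.

Lemma parseval x : lsum (fun i => dotL L (b i) x * dotL L (b i) x) (seq 0 m) = dotL L x x.
Proof.
  rewrite (lsum_ext _ (fun i => lsum (fun w => x w * (b i w * dotL L (b i) x)) L)).
  2:{ intros i _. transitivity (lsum (fun w => b i w * x w) L * dotL L (b i) x). reflexivity.
      rewrite <- (lsum_scal_r (dotL L (b i) x) (fun w => b i w * x w)). apply lsum_ext; intros; ring. }
  rewrite lsum_swap. transitivity (lsum (fun w => x w * x w) L); [|reflexivity].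
  apply lsum_ext. intros w Hw.
  rewrite (lsum_scal (x w) (fun i => b i w * dotL L (b i) x)). rewrite reconstruct; auto.
Qed.
End FinC.

Lemma Ceq (z w : C) : Cre z = Cre w -> Cim z = Cim w -> z = w.
Proof. destruct z, w; simpl; intros; subst; auto. Qed.

Section Cross.
Context {V1 V2 : Type} (E1 : V1 -> V1 -> Prop) (root1 : V1) (E2 : V2 -> V2 -> Prop) (root2 : V2).
Hypothesis T1 : rooted_directed_tree E1 root1.
Hypothesis lf1 : locally_finite E1.
Hypothesis ll1 : leafless E1.
Hypothesis T2 : rooted_directed_tree E2 root2.
Hypothesis lf2 : locally_finite E2.
Hypothesis ll2 : leafless E2.
Hypothesis Hlen : forall n, length (G E1 root1 n) = length (G E2 root2 n).

Definition Ur (g : V1 -> R) (u : V2) : R :=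
  lsum (fun i => bb E2 root2 (depth E2 root2 u) i u *
                 dotL (G E1 root1 (depth E2 root2 u)) (bb E1 root1 (depth E2 root2 u) i) g)
       (seq 0 (mm E2 root2 (depth E2 root2 u))).

Lemma mm_eq n : mm E1 root1 n = mm E2 root2 n.
Proof. apply Hlen. Qed.

Lemma Ur_G n g u : In u (G E2 root2 n) ->
  Ur g u = combv (mm E2 root2 n) (bb E2 root2 n) (fun i => dotL (G E1 root1 n) (bb E1 root1 n i) g) u.
Proof. intros H. unfold Ur, combv. rewrite (depth_G E2 root2 T2 lf2 n u H). reflexivity. Qed.

Lemma ON1 n i j : (i < mm E2 root2 n)%nat -> (j < mm E2 root2 n)%nat ->
  dotL (G E1 root1 n) (bb E1 root1 n i) (bb E1 root1 n j) = if deq i j then 1 else 0.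
Proof. rewrite <- mm_eq. apply bb_ON; auto. Qed.
Lemma ON2 n i j : (i < mm E2 root2 n)%nat -> (j < mm E2 root2 n)%nat ->
  dotL (G E2 root2 n) (bb E2 root2 n i) (bb E2 root2 n j) = if deq i j then 1 else 0.
Proof. apply bb_ON; auto. Qed.

Lemma Ur_parseval n g : dotL (G E2 root2 n) (Ur g) (Ur g) = dotL (G E1 root1 n) g g.
Proof.
  unfold dotL at 1. rewrite (lsum_ext _ (fun u =>
    combv (mm E2 root2 n) (bb E2 root2 n) (fun i => dotL (G E1 root1 n) (bb E1 root1 n i) g) u *
    combv (mm E2 root2 n) (bb E2 root2 n) (fun i => dotL (G E1 root1 n) (bb E1 root1 n i) g) u)).
  2:{ intros u Hu. rewrite (Ur_G n g u Hu). reflexivity. }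
  fold (dotL (G E2 root2 n) (combv (mm E2 root2 n) (bb E2 root2 n) (fun i => dotL (G E1 root1 n) (bb E1 root1 n i) g))
     (combv (mm E2 root2 n) (bb E2 root2 n) (fun i => dotL (G E1 root1 n) (bb E1 root1 n i) g))).
  rewrite quad_ON by (intros; apply ON2; auto).
  rewrite <- mm_eq. apply (parseval (G E1 root1 n) (G_nodup E1 root1 T1 lf1 n)).
  intros; apply bb_complete; auto.
Qed.

Definition Uc (f : V1 -> C) : V2 -> C :=
  fun u => mkC (Ur (fun v => Cre (f v)) u) (Ur (fun v => Cim (f v)) u).

Lemma sumsq_dotL {V} (f : V -> C) L : sumsq f L = dotL L (fun v => Cre (f v)) (fun v => Cre (f v)) + dotL L (fun v => Cim (f v)) (fun v => Cim (f v)).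
Proof. rewrite sumsq_lsum. unfold dotL. rewrite <- lsum_plus. reflexivity. Qed.

Lemma sumsq_Uc_G n f : sumsq (Uc f) (G E2 root2 n) = sumsq f (G E1 root1 n).
Proof. rewrite !sumsq_dotL. unfold Uc; simpl. rewrite !Ur_parseval. reflexivity. Qed.

Lemma sumsq_Uc_Gall N f : sumsq (Uc f) (Gall E2 root2 N) = sumsq f (Gall E1 root1 N).
Proof. unfold Gall. rewrite !sumsq_lsum, !lsum_flat_map. apply lsum_ext. intros n _.
  rewrite <- !sumsq_lsum. apply sumsq_Uc_G. Qed.

Lemma Uc_l2 f : in_l2 f -> in_l2 (Uc f).
Proof. intros H. apply (l2_T E1 root1 T1 lf1) in H. apply (l2_T E2 root2 T2 lf2).
  destruct H as [M HM]. exists M. intros N. rewrite sumsq_Uc_Gall. auto. Qed.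

Lemma Uc_iso f s : sqnorm_is f s -> sqnorm_is (Uc f) s.
Proof.
  intros H. apply (sqnorm_T E1 root1 T1 lf1) in H. apply (sqnorm_T E2 root2 T2 lf2).
  destruct H as [Hub Hlub]. split.
  - intros x [N ->]. rewrite sumsq_Uc_Gall. apply Hub. eauto.
  - intros b Hb. apply Hlub. intros x [N ->]. rewrite <- sumsq_Uc_Gall. apply Hb; eauto.
Qed.

Lemma Ur_lin3 a b g1 g2 g3 u : Ur (fun v => a * g1 v + b * g2 v + g3 v) u = a * Ur g1 u + b * Ur g2 u + Ur g3 u.
Proof.
  unfold Ur. set (n := depth E2 root2 u).
  rewrite <- !lsum_scal, <- !lsum_plus. apply lsum_ext. intros i _.
  unfold dotL. replace (lsum (fun u0 => bb E1 root1 n i u0 * (a * g1 u0 + b * g2 u0 + g3 u0)) (G E1 root1 n))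
    with (a * lsum (fun u0 => bb E1 root1 n i u0 * g1 u0) (G E1 root1 n) + b * lsum (fun u0 => bb E1 root1 n i u0 * g2 u0) (G E1 root1 n)
          + lsum (fun u0 => bb E1 root1 n i u0 * g3 u0) (G E1 root1 n)).
  ring. rewrite <- !lsum_scal, <- !lsum_plus. apply lsum_ext; intros; ring.
Qed.

Lemma Uc_lin (a : C) f g u : Uc (fun v => Cadd (Cmul a (f v)) (g v)) u = Cadd (Cmul a (Uc f u)) (Uc g u).
Proof.
  unfold Uc. apply Ceq; simpl.
  - transitivity (Ur (fun v => Cre a * Cre (f v) + (- Cim a) * Cim (f v) + Cre (g v)) u).
    { f_equal; apply functional_extensionality; intros; ring. } rewrite Ur_lin3. ring.
  - transitivity (Ur (fun v => Cre a * Cim (f v) + Cim a * Cre (f v) + Cim (g v)) u).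
    { f_equal; apply functional_extensionality; intros; ring. } rewrite Ur_lin3. ring.
Qed.

Variable q : R.
Hypothesis hq : 1 <= q.

Lemma Ur_Sr g u : Ur (Sr E1 root1 q g) u = Sr E2 root2 q (Ur g) u.
Proof.
  destruct (excluded_middle_informative (exists v, E2 v u)) as [[p Hp]|Hn].
  - apply (chl_E E2 lf2) in Hp. set (n := depth E2 root2 p).
    assert (Hpn : In p (G E2 root2 n)) by (apply in_G_depth; auto).
    assert (Hu : In u (G E2 root2 (S n))) by (eapply chl_G; eauto).
    rewrite (Sr_chl E2 root2 T2 lf2 q (Ur g) p u Hp). rewrite (Ur_G n g p Hpn).
    unfold Ur. rewrite (depth_G E2 root2 T2 lf2 (S n) u Hu).
    pose proof (mm_le E2 root2 lf2 ll2 n).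
    replace (mm E2 root2 (S n)) with (mm E2 root2 n + (mm E2 root2 (S n) - mm E2 root2 n))%nat by lia.
    rewrite seq_app, lsum_app.
    rewrite (lsum_ext _ (fun _ => 0) (seq (0 + mm E2 root2 n) _)). rewrite lsum_zero, Rplus_0_r.
    + rewrite (lam_eq E2 root2 T2 lf2 q n p Hpn). unfold combv. rewrite <- lsum_scal. apply lsum_ext.
      intros i Hi. apply in_seq in Hi.
      rewrite (bb_S_lt E2 root2 lf2 ll2 n i) by lia.
      rewrite (bb_S_lt E1 root1 lf1 ll1 n i) by (rewrite mm_eq; lia).
      rewrite (dot_W_Sr E1 root1 T1 lf1 ll1 q n). rewrite (Wop_chl E2 root2 T2 lf2 _ p u Hp). field.
      pose proof (kk_pos E2 lf2 ll2 p). apply Rgt_not_eq. apply sqrt_lt_R0. auto.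
    + intros i Hi. apply in_seq in Hi.
      rewrite (dot_H_Sr E1 root1 T1 lf1 q n). ring. apply bb_S_ge; auto; rewrite !mm_eq; lia.
  - unfold Sr at 2. destruct (excluded_middle_informative _); [contradiction|].
    assert (Hd : depth E2 root2 u = 0%nat).
    { pose proof (in_G_depth E2 root2 T2 lf2 u). destruct (depth E2 root2 u); auto.
      apply (G_S_inv E2 root2 T2 lf2) in H. exfalso. apply Hn. exists (parent E2 root2 u).
      apply chl_E; auto. apply H. }
    unfold Ur. rewrite Hd. rewrite (lsum_ext _ (fun _ => 0)). apply lsum_zero.
    intros i _. rewrite dot_Sr_G0; auto. ring.
Qed.

Lemma Uc_int f u : Uc (dirichlet_shift E1 root1 q f) u = dirichlet_shift E2 root2 q (Uc f) u.
Proof.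
  apply Ceq.
  - rewrite Sr_re. unfold Uc at 1. simpl. rewrite <- Ur_Sr. f_equal. apply functional_extensionality.
    intros v. rewrite Sr_re. reflexivity.
  - rewrite Sr_im. unfold Uc at 1. simpl. rewrite <- Ur_Sr. f_equal. apply functional_extensionality.
    intros v. rewrite Sr_im. reflexivity.
Qed.

End Cross.
Lemma Ur_inv {V1 V2 : Type} (E1 : V1 -> V1 -> Prop) (root1 : V1) (E2 : V2 -> V2 -> Prop) (root2 : V2)
  (T1 : rooted_directed_tree E1 root1) (lf1 : locally_finite E1) (ll1 : leafless E1)
  (T2 : rooted_directed_tree E2 root2) (lf2 : locally_finite E2) (ll2 : leafless E2)
  (Hlen : forall n, length (G E1 root1 n) = length (G E2 root2 n)) h u :
  Ur E1 root1 E2 root2 (Ur E2 root2 E1 root1 h) u = h u.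
Proof.
  set (n := depth E2 root2 u).
  assert (Hu : In u (G E2 root2 n)) by (apply in_G_depth; auto).
  rewrite (Ur_G E1 root1 E2 root2 T2 lf2 n _ u Hu). unfold combv.
  transitivity (lsum (fun j => bb E2 root2 n j u * dotL (G E2 root2 n) (bb E2 root2 n j) h) (seq 0 (mm E2 root2 n))).
  - apply lsum_ext. intros j Hj. apply in_seq in Hj. f_equal.
    transitivity (dotL (G E1 root1 n) (bb E1 root1 n j)
      (combv (mm E1 root1 n) (bb E1 root1 n) (fun i => dotL (G E2 root2 n) (bb E2 root2 n i) h))).
    + unfold dotL. apply lsum_ext. intros w Hw. f_equal. apply (Ur_G E2 root2 E1 root1 T1 lf1 n h w Hw).
    + apply (coef_comb (G E1 root1 n) (mm E1 root1 n) (bb E1 root1 n)).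
      apply bb_ON; auto. unfold mm. rewrite Hlen. fold (mm E2 root2 n). lia.
  - apply (reconstruct (G E2 root2 n) (G_nodup E2 root2 T2 lf2 n) (mm E2 root2 n) (bb E2 root2 n)); auto.
    intros; apply bb_complete; auto.
Qed.

Theorem mainTheorem1
  (q : nat) (hq : (2 <= q)%nat)
  (V1 : Type) (E1 : V1 -> V1 -> Prop) (root1 : V1)
  (T1 : rooted_directed_tree E1 root1) (lf1 : locally_finite E1)
  (ll1 : leafless E1) (ci1 : countably_infinite_type (V := V1))
  (V2 : Type) (E2 : V2 -> V2 -> Prop) (root2 : V2)
  (T2 : rooted_directed_tree E2 root2) (lf2 : locally_finite E2)
  (ll2 : leafless E2) (ci2 : countably_infinite_type (V := V2)) :
  unitarily_equivalent (dirichlet_shift E1 root1 (INR q))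
                       (dirichlet_shift E2 root2 (INR q))
  <-> (forall n : nat, branching_sum E1 root1 n = branching_sum E2 root2 n).
Proof.
  assert (hq1 : 1 < INR q) by (replace 1 with (INR 1) by reflexivity; apply lt_INR; lia).
  split.
  - intros [U [Ul2 [Ulin [Uiso [Usurj Uint]]]]] n.
    pose proof (fwd_card E1 root1 E2 root2 T1 lf1 ll1 T2 lf2 ll2 (INR q) hq1 U Ul2 Ulin Uiso Usurj Uint) as Hlen.
    pose proof (branching_G E1 root1 T1 lf1 ll1 n). pose proof (branching_G E2 root2 T2 lf2 ll2 n).
    pose proof (Hlen n). pose proof (Hlen (S n)). lia.
  - intros Hb.
    assert (Hlen : forall n, length (G E1 root1 n) = length (G E2 root2 n)).
    { induction n. reflexivity.
      pose proof (branching_G E1 root1 T1 lf1 ll1 n). pose proof (branching_G E2 root2 T2 lf2 ll2 n).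
      pose proof (Hb n). lia. }
    assert (Hlen' : forall n, length (G E2 root2 n) = length (G E1 root1 n)) by (intros; auto).
    exists (Uc E1 root1 E2 root2). split; [|split; [|split; [|split]]].
    + apply Uc_l2; auto.
    + intros; apply Uc_lin.
    + intros; apply Uc_iso; auto.
    + intros g Hg. exists (Uc E2 root2 E1 root1 g). split. apply Uc_l2; auto.
      intros u. unfold Uc at 1. apply Ceq; simpl.
      apply (Ur_inv E1 root1 E2 root2 T1 lf1 ll1 T2 lf2 ll2 Hlen (fun w => Cre (g w))).
      apply (Ur_inv E1 root1 E2 root2 T1 lf1 ll1 T2 lf2 ll2 Hlen (fun w => Cim (g w))).
    + intros; apply Uc_int; auto.
Qed.
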